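(* Let $f_0\in C^\infty([0,\infty))$ be a monotone solution of \[ f''(y)+\left(\frac{2}{y}-\frac{y}{2}\right)f'(y)-\frac{1}{y^2}\sin(2f(y))=0\ \ (y>0),\qquad f(0)=0,\qquad \lim_{y\to\infty}f(y)\ \text{finite}, \] satisfying $\lVert f_0-\widetilde f_0\rVert\le 5\cdot10^{-4}$ (notation in the context), and let $\mathcal A_0$ be the unique self-adjoint extension on $L^2_\rho(0,\infty)$, $\rho(y)=y^2e^{-y^2/4}$, of $\mathcal A_0 w=-\frac{1}{\rho}\partial_y(\rho\,\partial_yw)+\frac{2\cos(2f_0(y))}{y^2}w$ on $C_0^\infty(0,\infty)$. Then $W(y):=yf_0'(y)$ is an eigenfunction of $\mathcal A_0$ with eigenvalue $-1$. Furthermore, $W(y)>0$ for all $y\in(0,\infty)$.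
   Context: Here $\widetilde f_0(y)=2\arctan\big(\sum_{n=0}^{14}(f_0)_nT_{2n+1}(y/\sqrt{2+y^2})\big)$ with $T_m$ the Chebyshev polynomials of the first kind and coefficients $(f_0)_0,\dots,(f_0)_{14}$ equal to $\frac{268245}{72878},\frac{-3174}{105551},\frac{1897}{97022},\frac{14}{72731},\frac{79}{119383},\frac{4}{66337},\frac{5}{109368},\frac{1}{109045},\frac{1}{204079},\frac{1}{675805},\frac{1}{1400761},\frac{1}{3586839},\frac{1}{7289041},\frac{1}{16940631},\frac{1}{59286294}$; $\lVert f\rVert=\lVert p_1f\rVert_{L^\infty(0,\infty)}+\lVert p_3f'\rVert_{L^\infty(0,\infty)}$ with $p_1(y)=\frac{\sqrt{2+y^2}}{\sqrt2\,y}$, $p_3(y)=\frac{(2+y^2)^{3/2}}{2\sqrt2}$. *)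

(* Defs.v *)
From Stdlib Require Import Reals List.
From Coquelicot Require Import Coquelicot.
Import ListNotations.
Open Scope R_scope.

Fixpoint cheb (n : nat) (t : R) : R :=
  match n with
  | O => 1
  | S m => match m with
           | O => t
           | S k => 2 * t * cheb m t - cheb k t
           end
  end.

Definition f0_coefs : list R :=
  [268245 / 72878; -3174 / 105551; 1897 / 97022; 14 / 72731; 79 / 119383;
   4 / 66337; 5 / 109368; 1 / 109045; 1 / 204079; 1 / 675805; 1 / 1400761;
   1 / 3586839; 1 / 7289041; 1 / 16940631; 1 / 59286294].

Definition ftilde (y : R) : R :=
  2 * atan (sum_f_R0 (fun n => nth n f0_coefs 0 *
                         cheb (2 * n + 1) (y / sqrt (2 + y ^ 2))) 14).

Definition p1 (y : R) : R := sqrt (2 + y ^ 2) / (sqrt 2 * y).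
Definition p3 (y : R) : R := (2 + y ^ 2) * sqrt (2 + y ^ 2) / (2 * sqrt 2).

(** ||g|| <= eps, where ||g|| = ||p1 g||_{L^oo(0,oo)} + ||p3 g'||_{L^oo(0,oo)}
    (g continuous on (0,oo), so the essential sup is the sup). *)
Definition weighted_norm_le (g : R -> R) (eps : R) : Prop :=
  exists a b : R, a + b <= eps /\
    (forall y, 0 < y -> Rabs (p1 y * g y) <= a) /\
    (forall y, 0 < y -> Rabs (p3 y * Derive g y) <= b).

(** f is in C^oo([0,oo)): all derivatives exist on (0,oo) and extend
    continuously to 0 (and f itself is right-continuous at 0). *)
Definition smooth_closed_halfline (f : R -> R) : Prop :=
  (forall n x, 0 < x -> ex_derive_n f n x) /\
  (forall n, exists L, filterlim (Derive_n f n) (at_right 0) (locally L)) /\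
  filterlim f (at_right 0) (locally (f 0)).

Definition monotone_halfline (f : R -> R) : Prop :=
  (forall x y, 0 <= x <= y -> f x <= f y) \/
  (forall x y, 0 <= x <= y -> f y <= f x).

Definition rho (y : R) : R := y ^ 2 * exp (- (y ^ 2) / 4).

Definition test_fn (phi : R -> R) : Prop :=
  (exists a b, 0 < a < b /\ forall y, (y < a \/ b < y) -> phi y = 0) /\
  (forall n y, 0 < y -> ex_derive_n phi n y).

Definition A0 (f0 : R -> R) (w : R -> R) (y : R) : R :=
  - Derive (fun z => rho z * Derive w z) y / rho y
  + 2 * cos (2 * f0 y) / y ^ 2 * w y.

Definition l2rho_sq_le (h : R -> R) (eps : R) : Prop :=
  exists v, is_RInt_gen (fun y => (h y) ^ 2 * rho y)
              (at_right 0) (Rbar_locally p_infty) v /\ v <= eps.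

(** (W, V) lies in the graph of the closure of A0 on C_0^oo(0,oo) in
    L^2_rho(0,oo).  Since A0 is essentially self-adjoint, this closure is
    its unique self-adjoint extension. *)
Definition in_closure_graph (f0 W V : R -> R) : Prop :=
  exists phi : nat -> R -> R,
    (forall n, test_fn (phi n)) /\
    (forall eps, 0 < eps -> exists N, forall n, (N <= n)%nat ->
       l2rho_sq_le (fun y => phi n y - W y) eps /\
       l2rho_sq_le (fun y => A0 f0 (phi n) y - V y) eps).

Definition eigenfunction_A0 (f0 W : R -> R) (lam : R) : Prop :=
  in_closure_graph f0 W (fun y => lam * W y) /\
  exists y, 0 < y /\ W y <> 0.

(* Main.v *)
Require Import Defs.
From Stdlib Require Import List.
From Stdlib Require Import Reals Lra Lia Classical.
From Coquelicot Require Import Coquelicot.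
Open Scope R_scope.

Definition Dn (U : R -> Prop) (n : nat) (f : R -> R) :=
  forall k x, (k <= n)%nat -> U x -> ex_derive_n f k x.

Lemma Derive_n_Derive f k x : Derive_n (Derive f) k x = Derive_n f (S k) x.
Proof.
  replace (S k) with (k+1)%nat by lia. rewrite <- (Derive_n_comp f k 1).
  apply Derive_n_ext. intros t. reflexivity.
Qed.

Lemma exdn1 f x : ex_derive_n f 1 x -> ex_derive f x.
Proof. intro H. apply (ex_derive_ext (Derive_n f 0)). reflexivity. exact H. Qed.
Lemma exdn1' f x : ex_derive f x -> ex_derive_n f 1 x.
Proof. intro H. apply (ex_derive_ext f (Derive_n f 0)). reflexivity. exact H. Qed.
Lemma exdnS f k x : ex_derive_n f (S k) x <-> ex_derive (Derive_n f k) x.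
Proof. split; intro H; exact H. Qed.

Lemma exdn_shift f k x : ex_derive_n f (S (S k)) x <-> ex_derive_n (Derive f) (S k) x.
Proof.
  rewrite !exdnS. split; apply ex_derive_ext; intro t; rewrite Derive_n_Derive; reflexivity.
Qed.

Lemma Dn_mono U n m f : (m <= n)%nat -> Dn U n f -> Dn U m f.
Proof. intros H D k x Hk Hx. apply D; auto; lia. Qed.

Lemma Dn_S U n f : Dn U (S n) f -> (forall x, U x -> ex_derive f x) /\ Dn U n (Derive f).
Proof.
  intros D; split.
  - intros x Hx. apply exdn1. apply D; [lia|exact Hx].
  - intros [|k] x Hk Hx; [exact I|]. apply (proj1 (exdn_shift f k x)). apply D; [lia|exact Hx].
Qed.

Lemma Dn_S' U n f : (forall x, U x -> ex_derive f x) -> Dn U n (Derive f) -> Dn U (S n) f.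
Proof.
  intros H1 D [|[|k]] x Hk Hx; [exact I| |].
  - apply exdn1'. apply H1; exact Hx.
  - apply (proj2 (exdn_shift f k x)). apply D; [lia|exact Hx].
Qed.

Lemma Dn_ext U n f g : open U -> (forall x, U x -> f x = g x) -> Dn U n f -> Dn U n g.
Proof.
  intros HU E D k x Hk Hx. apply ex_derive_n_ext_loc with f.
  - apply filter_imp with U; [|apply HU; auto]. intros; auto.
  - apply D; auto.
Qed.

Lemma Dn_plus U n f g : open U -> Dn U n f -> Dn U n g -> Dn U n (fun x => f x + g x).
Proof.
  intros HU Df Dg k x Hk Hx. apply ex_derive_n_plus.
  - apply filter_imp with U; [|apply HU; auto]. intros y Hy j Hj. apply Df; auto; lia.
  - apply filter_imp with U; [|apply HU; auto]. intros y Hy j Hj. apply Dg; auto; lia.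
Qed.

Lemma Dn_const U n c : Dn U n (fun _ => c).
Proof. intros k x _ _. apply ex_derive_n_const. Qed.

Lemma Dn_scal U n c f : Dn U n f -> Dn U n (fun x => c * f x).
Proof. intros D k x Hk Hx. apply ex_derive_n_scal_l. auto. Qed.

Lemma Dn_mult U n f g : open U -> Dn U n f -> Dn U n g -> Dn U n (fun x => f x * g x).
Proof.
  intros HU. revert f g. induction n as [|n IH]; intros f g Df Dg.
  - intros k x Hk Hx. replace k with 0%nat by lia. exact I.
  - destruct (Dn_S _ _ _ Df) as [df Df']. destruct (Dn_S _ _ _ Dg) as [dg Dg'].
    apply Dn_S'.
    + intros x Hx. apply ex_derive_mult; auto.
    + apply Dn_ext with (fun x => Derive f x * g x + f x * Derive g x); auto.
      * intros x Hx. rewrite Derive_mult; auto.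
      * apply Dn_plus; auto.
        -- apply IH; auto. apply Dn_mono with (S n); auto.
        -- apply IH; auto. apply Dn_mono with (S n); auto.
Qed.

Lemma Dn_inv U n g : open U -> (forall x, U x -> g x <> 0) -> Dn U n g -> Dn U n (fun x => / g x).
Proof.
  intros HU Hg. revert g Hg. induction n as [|n IH]; intros g Hg Dg.
  - intros k x Hk Hx. replace k with 0%nat by lia. exact I.
  - destruct (Dn_S _ _ _ Dg) as [dg Dg'].
    apply Dn_S'.
    + intros x Hx. apply ex_derive_inv; auto.
    + apply Dn_ext with (fun x => (-1) * (Derive g x * (/ g x * / g x))); auto.
      * intros x Hx. rewrite Derive_inv; auto. field. auto.
      * apply Dn_scal. apply Dn_mult; auto. apply Dn_mult; auto; apply IH; auto;
        apply Dn_mono with (S n); auto.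
Qed.

Definition SM U f := forall n, Dn U n f.

Lemma SM_id U : SM U (fun x => x).
Proof.
  intros n k x _ _. apply ex_derive_n_ext with (fun x => x ^ 1).
  intros; simpl; ring. apply ex_derive_n_pow.
Qed.

Lemma SM_plus U f g : open U -> SM U f -> SM U g -> SM U (fun x => f x + g x).
Proof. intros HU F G n. apply Dn_plus; auto. Qed.
Lemma SM_mult U f g : open U -> SM U f -> SM U g -> SM U (fun x => f x * g x).
Proof. intros HU F G n. apply Dn_mult; auto. Qed.
Lemma SM_inv U f : open U -> (forall x, U x -> f x <> 0) -> SM U f -> SM U (fun x => / f x).
Proof. intros HU H F n. apply Dn_inv; auto. Qed.
Lemma SM_const U c : SM U (fun _ => c).
Proof. intros n; apply Dn_const. Qed.
Lemma SM_ext U f g : open U -> (forall x, U x -> f x = g x) -> SM U f -> SM U g.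
Proof. intros HU E F n. apply Dn_ext with f; auto. Qed.
Lemma SM_Derive U f : SM U f -> SM U (Derive f).
Proof. intros F n. apply (Dn_S U n f (F (S n))). Qed.
Lemma SM_sub U V f : (forall x, V x -> U x) -> SM U f -> SM V f.
Proof. intros H F n k x Hk Hx. apply (F n); auto. Qed.

Definition SMall f := forall n x, ex_derive_n f n x.
Lemma SMall_SM f U : SMall f -> SM U f.
Proof. intros F n k x _ _. apply F. Qed.
Lemma SM_SMall f : SM (fun _ => True) f -> SMall f.
Proof. intros F n x. apply (F n n x); auto. Qed.

Lemma SMall_affine f a b : SMall f -> SMall (fun y => f (a * y + b)).
Proof.
  intros F n x.
  apply ex_derive_n_comp_scal with (f := fun z => f (z + b)).
  apply filter_forall. intros z k _. apply ex_derive_n_comp_trans. apply F.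
Qed.

Lemma isd_const c x : is_derive (fun _ => c) x 0.
Proof. apply is_derive_Reals. apply derivable_pt_lim_const. Qed.
Lemma isd_id x : is_derive (fun y => y) x 1.
Proof. apply is_derive_Reals. apply derivable_pt_lim_id. Qed.

Lemma isd_plus f g x a b : is_derive f x a -> is_derive g x b -> is_derive (fun y => f y + g y) x (a + b).
Proof. intros A B. exact (is_derive_plus f g x a b A B). Qed.
Lemma isd_minus f g x a b : is_derive f x a -> is_derive g x b -> is_derive (fun y => f y - g y) x (a - b).
Proof. intros A B. exact (is_derive_minus f g x a b A B). Qed.
Lemma isd_mult f g x a b : is_derive f x a -> is_derive g x b -> is_derive (fun y => f y * g y) x (a * g x + f x * b).
Proof. intros A B. apply is_derive_Reals in A. apply is_derive_Reals in B. apply is_derive_Reals.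
  apply (derivable_pt_lim_mult f g x a b A B). Qed.
Lemma isd_opp f x a : is_derive f x a -> is_derive (fun y => - f y) x (- a).
Proof. intros A. exact (is_derive_opp f x a A). Qed.
Lemma isd_comp f g x a b : is_derive f (g x) a -> is_derive g x b -> is_derive (fun y => f (g y)) x (b * a).
Proof. intros A B. exact (is_derive_comp f g x a b A B). Qed.
Lemma isd_inv f x a : is_derive f x a -> f x <> 0 -> is_derive (fun y => / f y) x (- a / f x ^ 2).
Proof. intros A B. exact (is_derive_inv f x a A B). Qed.
Lemma isd_exp x : is_derive exp x (exp x).
Proof. apply is_derive_Reals. apply derivable_pt_lim_exp. Qed.
Lemma isd_ext_eq (f : R -> R) (x a b : R) : is_derive f x a -> a = b -> is_derive f x b.
Proof. intros A <-. exact A. Qed.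

Inductive isP : (R -> R) -> Prop :=
| isP_c c : isP (fun _ => c)
| isP_id : isP (fun u => u)
| isP_add p q : isP p -> isP q -> isP (fun u => p u + q u)
| isP_mul p q : isP p -> isP q -> isP (fun u => p u * q u).

Lemma isP_der p : isP p -> exists p', isP p' /\ forall u, is_derive p u (p' u).
Proof.
  induction 1 as [c| |p q _ [p' [Hp' Dp]] _ [q' [Hq' Dq]]|p q Hp [p' [Hp' Dp]] Hq [q' [Hq' Dq]]].
  - exists (fun _ => 0). split. constructor. intro u. apply isd_const.
  - exists (fun _ => 1). split. constructor. intro u. apply isd_id.
  - exists (fun u => p' u + q' u). split. constructor; auto. intro u. apply isd_plus; auto.
  - exists (fun u => p' u * q u + p u * q' u). split.
    + constructor; constructor; auto.
    + intro u. apply isd_mult; auto.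
Qed.

Lemma isP_bound p : isP p -> exists C m, 0 <= C /\ forall u, 1 <= u -> Rabs (p u) <= C * u ^ m.
Proof.
  induction 1 as [c| |p q _ [C1 [m1 [HC1 B1]]] _ [C2 [m2 [HC2 B2]]]|p q _ [C1 [m1 [HC1 B1]]] _ [C2 [m2 [HC2 B2]]]].
  - exists (Rabs c), 0%nat. split. apply Rabs_pos. intros u _. simpl; lra.
  - exists 1, 1%nat. split. lra. intros u Hu. simpl. rewrite Rabs_right; lra.
  - exists (C1 + C2), (m1 + m2)%nat. split. lra. intros u Hu.
    assert (u ^ m1 <= u ^ (m1 + m2)) by (apply Rle_pow; [lra|lia]).
    assert (u ^ m2 <= u ^ (m1 + m2)) by (apply Rle_pow; [lra|lia]).
    eapply Rle_trans. apply Rabs_triang. specialize (B1 u Hu). specialize (B2 u Hu).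
    nra.
  - exists (C1 * C2), (m1 + m2)%nat. split. nra. intros u Hu. rewrite pow_add, Rabs_mult.
    specialize (B1 u Hu). specialize (B2 u Hu).
    assert (0 <= Rabs (p u)) by apply Rabs_pos. assert (0 <= Rabs (q u)) by apply Rabs_pos.
    assert (0 <= u ^ m1) by (apply pow_le; lra).
    assert (0 <= u ^ m2) by (apply pow_le; lra).
    apply Rle_trans with ((C1 * u ^ m1) * Rabs (q u)). apply Rmult_le_compat_r; auto.
    replace (C1 * C2 * (u ^ m1 * u ^ m2)) with ((C1 * u ^ m1) * (C2 * u ^ m2)) by ring.
    apply Rmult_le_compat_l; nra.
Qed.

Lemma exp_INR_mult k y : exp (INR k * y) = exp y ^ k.
Proof.
  induction k as [|k IH]. simpl. rewrite Rmult_0_l, exp_0. reflexivity.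
  rewrite S_INR. replace ((INR k + 1) * y) with (INR k * y + y) by ring.
  rewrite exp_plus, IH. simpl. ring.
Qed.

Lemma exp_ge_id y : 0 <= y -> y <= exp y.
Proof.
  intro Hy. generalize (exp_ineq1_le y). lra.
Qed.

Lemma pow_le_exp k : exists K, 0 < K /\ forall u, 0 <= u -> u ^ k <= K * exp u.
Proof.
  destruct k as [|k].
  - exists 1. split. lra. intros u Hu. simpl. generalize (exp_ineq1_le u). lra.
  - exists (INR (S k) ^ (S k)). split. apply pow_lt. apply lt_0_INR; lia.
    intros u Hu. set (n := INR (S k)). assert (Hn : 0 < n) by (apply lt_0_INR; lia).
    replace u with (INR (S k) * (u / n)) at 2 by (fold n; field; lra).
    rewrite exp_INR_mult. fold n.
    replace (u ^ S k) with (n ^ S k * (u / n) ^ S k).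
    2:{ rewrite <- Rpow_mult_distr. f_equal. field. lra. }
    apply Rmult_le_compat_l. apply pow_le; lra.
    apply pow_incr. split. apply Rdiv_le_0_compat; lra. apply exp_ge_id. apply Rdiv_le_0_compat; lra.
Qed.

Lemma small_bound C K h eps : 0 <= C -> 0 < K -> 0 < h -> 0 < eps -> h <= eps / (C * K + 1) -> C * K * h < eps.
Proof.
  intros HC HK Hh He H. assert (HCK : 0 <= C * K) by (apply Rmult_le_pos; lra).
  apply Rmult_le_compat_l with (r := C * K) in H; auto.
  apply Rle_lt_trans with (C * K * (eps / (C * K + 1))); auto.
  apply Rmult_lt_reg_r with (C * K + 1). lra.
  replace (C * K * (eps / (C * K + 1)) * (C * K + 1)) with (C * K * eps) by (field; lra).
  assert (0 < eps * (C * K + 1) - C * K * eps) by (ring_simplify; lra). lra.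
Qed.

Lemma theta_est p C m K u : 0 <= C -> 0 < K -> 1 < u ->
  (forall u, 1 <= u -> Rabs (p u) <= C * u ^ m) ->
  (forall u, 0 <= u -> u ^ (m + 2) <= K * exp u) ->
  Rabs (p u * exp (- u) * u) <= C * K / u.
Proof.
  intros HC HK Hu B BK.
  specialize (B u ltac:(lra)). specialize (BK u ltac:(lra)).
  assert (He : 0 < exp (- u)) by apply exp_pos.
  assert (Hee : exp (- u) * exp u = 1) by (rewrite <- exp_plus; replace (- u + u) with 0 by ring; apply exp_0).
  rewrite !Rabs_mult. rewrite (Rabs_right u) by lra.
  rewrite (Rabs_right (exp (- u))) by lra.
  rewrite pow_add in BK. simpl in BK.
  assert (Hum : 0 < u ^ m) by (apply pow_lt; lra).
  assert (A : u ^ m * exp (- u) * u <= K / u).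
  { apply Rmult_le_reg_r with (u * exp u). apply Rmult_lt_0_compat; [lra|apply exp_pos].
    replace (K / u * (u * exp u)) with (K * exp u) by (field; lra).
    replace (u ^ m * exp (- u) * u * (u * exp u)) with (u ^ m * (u * (u * 1)) * (exp (- u) * exp u)) by ring.
    rewrite Hee. lra. }
  apply Rle_trans with (C * u ^ m * exp (- u) * u).
  { apply Rmult_le_compat_r. lra. apply Rmult_le_compat_r. lra. auto. }
  replace (C * K / u) with (C * (K / u)) by (field; lra).
  replace (C * u ^ m * exp (- u) * u) with (C * (u ^ m * exp (- u) * u)) by ring.
  apply Rmult_le_compat_l; auto.
Qed.

Definition theta_q (p : R -> R) (x : R) : R :=
  if Rlt_dec 0 x then p (/ x) * exp (- / x) else 0.

Lemma theta_q_der p : isP p -> exists p2, isP p2 /\ forall x, is_derive (theta_q p) x (theta_q p2 x).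
Proof.
  intros Hp. destruct (isP_der p Hp) as [p' [Hp' Dp]].
  destruct (isP_bound p Hp) as [C [m [HC B]]].
  destruct (pow_le_exp (m + 2)) as [K [HK BK]].
  exists (fun u => u * (u * (p u + (-1) * p' u))). split.
  { repeat constructor; auto. }
  intros x. destruct (Rlt_dec 0 x) as [Hx|Hx].
  -
    apply is_derive_ext_loc with (fun y => p (/ y) * exp (- / y)).
    { apply locally_interval with 0 p_infty; simpl; auto. intros y Hy _. unfold theta_q.
      destruct (Rlt_dec 0 y); [reflexivity|lra]. }
    unfold theta_q. destruct (Rlt_dec 0 x) as [_|]; [|lra].
    eapply isd_ext_eq.
    apply isd_mult.
    + apply isd_comp. apply Dp. apply isd_inv. apply isd_id. lra.
    + apply isd_comp. apply isd_exp. apply isd_opp.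
      apply isd_inv. apply isd_id. lra.
    + simpl. field. lra.
  - destruct (Req_dec x 0) as [->|Hx0].
    + apply is_derive_Reals. intros eps Heps.
      set (d := Rmin 1 (eps / (C * K + 1))).
      assert (HCK : 0 < C * K + 1) by (generalize (Rmult_le_pos C K HC (Rlt_le _ _ HK)); lra).
      assert (Hd : 0 < d). { unfold d. apply Rmin_pos. lra. apply Rdiv_lt_0_compat; lra. }
      exists (mkposreal d Hd). intros h Hh0 Hh. simpl in Hh.
      unfold theta_q at 1 2 3. destruct (Rlt_dec 0 0) as [|_]; [lra|].
      destruct (Rlt_dec 0 (0 + h)) as [Hh'|Hh'].
      2:{ replace ((0 - 0) / h - 0) with 0 by (field; auto). rewrite Rabs_R0. lra. }
      rewrite Rplus_0_l in *. rewrite Rabs_right in Hh; [|lra].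
      assert (Hd1 : d <= 1) by apply Rmin_l.
      assert (Hd2 : d <= eps / (C * K + 1)) by apply Rmin_r.
      replace ((p (/ h) * exp (- / h) - 0) / h - 0) with (p (/ h) * exp (- / h) * / h) by (field; lra).
      assert (Hu : 1 < / h). { rewrite <- Rinv_1. apply Rinv_lt_contravar; lra. }
      apply Rle_lt_trans with (C * K / / h).
      { apply (theta_est p C m K (/ h)); auto. }
      replace (C * K / / h) with (C * K * h) by (field; lra).
      apply (small_bound C K h eps); auto. lra.
    + apply is_derive_ext_loc with (fun _ => 0).
      { apply locally_interval with m_infty 0; simpl; auto. lra. intros y _ Hy. unfold theta_q.
        destruct (Rlt_dec 0 y); [lra|reflexivity]. }
      unfold theta_q. destruct (Rlt_dec 0 x); [lra|]. apply isd_const.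
Qed.

Definition theta := theta_q (fun _ => 1).

Lemma theta_Dn n : exists p, isP p /\ forall x, Derive_n theta n x = theta_q p x.
Proof.
  induction n as [|n [p [Hp E]]].
  - exists (fun _ => 1). split. constructor. intro; reflexivity.
  - destruct (theta_q_der p Hp) as [p2 [Hp2 D]]. exists p2. split; auto.
    intros x. simpl. rewrite (Derive_ext _ (theta_q p)); auto. apply is_derive_unique. auto.
Qed.

Lemma theta_SM : SMall theta.
Proof.
  intros [|n] x. exact I.
  destruct (theta_Dn n) as [p [Hp E]]. destruct (theta_q_der p Hp) as [p2 [_ D]].
  apply (proj2 (exdnS theta n x)). apply ex_derive_ext with (theta_q p).
  intros; symmetry; auto. eexists; apply D.
Qed.

Lemma theta_pos x : 0 < x -> 0 < theta x.
Proof. intros H. unfold theta, theta_q. destruct (Rlt_dec 0 x); [|lra]. rewrite Rmult_1_l. apply exp_pos. Qed.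
Lemma theta_zero x : x <= 0 -> theta x = 0.
Proof. intros H. unfold theta, theta_q. destruct (Rlt_dec 0 x); [lra|auto]. Qed.
Lemma theta_nonneg x : 0 <= theta x.
Proof. destruct (Rlt_dec 0 x). left; apply theta_pos; auto. rewrite theta_zero; lra. Qed.

Definition psi (x : R) : R := theta x * / (theta x + theta ((-1) * x + 1)).

Lemma psi_den x : 0 < theta x + theta ((-1) * x + 1).
Proof.
  destruct (Rlt_dec 0 x).
  - generalize (theta_pos x r) (theta_nonneg ((-1) * x + 1)). lra.
  - generalize (theta_pos ((-1) * x + 1) ltac:(lra)) (theta_nonneg x). lra.
Qed.

Lemma psi_SM : SMall psi.
Proof.
  apply SM_SMall. unfold psi. apply SM_mult. apply open_true.
  apply SMall_SM, theta_SM.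
  apply SM_inv. apply open_true. intros x _. generalize (psi_den x); lra.
  apply SM_plus. apply open_true. apply SMall_SM, theta_SM. apply SMall_SM, SMall_affine, theta_SM.
Qed.

Lemma psi_0 x : x <= 0 -> psi x = 0.
Proof. intros H. unfold psi. rewrite theta_zero; auto. ring. Qed.
Lemma psi_1 x : 1 <= x -> psi x = 1.
Proof. intros H. unfold psi. rewrite (theta_zero ((-1) * x + 1)) by lra. rewrite Rplus_0_r.
  field. generalize (theta_pos x ltac:(lra)); lra. Qed.
Lemma psi_range x : 0 <= psi x <= 1.
Proof.
  unfold psi. generalize (psi_den x) (theta_nonneg x) (theta_nonneg ((-1) * x + 1)). intros H1 H2 H3.
  split. apply Rmult_le_pos; auto. left; apply Rinv_0_lt_compat; auto.
  apply Rmult_le_reg_r with (theta x + theta ((-1) * x + 1)); auto.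
  rewrite Rmult_assoc, Rinv_l; lra.
Qed.

Lemma SMall_exd f x : SMall f -> ex_derive f x.
Proof. intros F. apply exdn1. apply F. Qed.

Lemma SMall_Derive f : SMall f -> SMall (Derive f).
Proof. intros F. apply SM_SMall. apply SM_Derive. apply SMall_SM. auto. Qed.

Definition dpsi := Derive psi.
Definition ddpsi := Derive dpsi.

Lemma dpsi_SM : SMall dpsi.
Proof. apply SMall_Derive, psi_SM. Qed.
Lemma ddpsi_SM : SMall ddpsi.
Proof. apply SMall_Derive, dpsi_SM. Qed.

Lemma psi_isd x : is_derive psi x (dpsi x).
Proof. apply Derive_correct. apply SMall_exd, psi_SM. Qed.
Lemma dpsi_isd x : is_derive dpsi x (ddpsi x).
Proof. apply Derive_correct. apply SMall_exd, dpsi_SM. Qed.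

Lemma Derive_out (f : R -> R) x : (forall y, y < 0 \/ 1 < y -> f y = 0) ->
  x < 0 \/ 1 < x -> Derive f x = 0.
Proof.
  intros H Hx. rewrite (Derive_ext_loc f (fun _ => 0)). apply Derive_const.
  destruct Hx as [Hx|Hx].
  - apply locally_interval with m_infty 0. exact I. exact Hx. intros y _ Hy. apply H; auto.
  - apply locally_interval with 1 p_infty. exact Hx. exact I. intros y Hy _. apply H; auto.
Qed.

Lemma Derive_out' (f : R -> R) x c d : (forall y, y < 0 -> f y = c) -> (forall y, 1 < y -> f y = d) ->
  x < 0 \/ 1 < x -> Derive f x = 0.
Proof.
  intros H1 H2 Hx. destruct Hx as [Hx|Hx].
  - rewrite (Derive_ext_loc f (fun _ => c)). apply Derive_const.
    apply locally_interval with m_infty 0. exact I. exact Hx. intros y _ Hy. apply H1; auto.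
  - rewrite (Derive_ext_loc f (fun _ => d)). apply Derive_const.
    apply locally_interval with 1 p_infty. exact Hx. exact I. intros y Hy _. apply H2; auto.
Qed.

Lemma dpsi_out x : x < 0 \/ 1 < x -> dpsi x = 0.
Proof.
  apply Derive_out' with 0 1. intros; apply psi_0; lra. intros; apply psi_1; lra.
Qed.
Lemma ddpsi_out x : x < 0 \/ 1 < x -> ddpsi x = 0.
Proof. apply Derive_out. apply dpsi_out. Qed.

Lemma bnd01 (g : R -> R) : (forall x, ex_derive g x) -> (forall x, x < 0 \/ 1 < x -> g x = 0) ->
  exists M, forall x, Rabs (g x) <= M.
Proof.
  intros D Z. destruct (bounded_continuity (K := R_AbsRing) (V := R_NormedModule) g 0 1) as [M HM].
  { intros x _. apply ex_derive_continuous. apply D. }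
  exists M. intros x. destruct (Rlt_dec x 0) as [H|H].
  - rewrite Z by auto. rewrite Rabs_R0. specialize (HM 0 ltac:(lra)).
    generalize (norm_ge_0 (g 0)). intro. change (norm (g 0) < M) in HM. lra.
  - destruct (Rlt_dec 1 x) as [H'|H'].
    + rewrite Z by auto. rewrite Rabs_R0. specialize (HM 0 ltac:(lra)).
      generalize (norm_ge_0 (g 0)). intro. lra.
    + specialize (HM x ltac:(lra)). left. exact HM.
Qed.

Lemma dpsi_bnd : exists M, 0 <= M /\ forall x, Rabs (dpsi x) <= M.
Proof.
  destruct (bnd01 dpsi) as [M HM]. intros; apply SMall_exd, dpsi_SM. apply dpsi_out.
  exists M. split; auto. generalize (HM 0) (Rabs_pos (dpsi 0)). lra.
Qed.
Lemma ddpsi_bnd : exists M, 0 <= M /\ forall x, Rabs (ddpsi x) <= M.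
Proof.
  destruct (bnd01 ddpsi) as [M HM]. intros; apply SMall_exd, ddpsi_SM. apply ddpsi_out.
  exists M. split; auto. generalize (HM 0) (Rabs_pos (ddpsi 0)). lra.
Qed.

Definition chi (m y : R) := psi (m * y + -1) * psi ((- / m) * y + 2).
Definition chi1 (m y : R) :=
  m * dpsi (m * y + -1) * psi ((- / m) * y + 2) + psi (m * y + -1) * ((- / m) * dpsi ((- / m) * y + 2)).
Definition chi2 (m y : R) :=
  m * m * ddpsi (m * y + -1) * psi ((- / m) * y + 2)
  + 2 * (m * dpsi (m * y + -1) * ((- / m) * dpsi ((- / m) * y + 2)))
  + psi (m * y + -1) * ((- / m) * (- / m) * ddpsi ((- / m) * y + 2)).

Lemma isd_affine (f df : R -> R) a b y : (forall x, is_derive f x (df x)) ->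
  is_derive (fun y => f (a * y + b)) y (a * df (a * y + b)).
Proof.
  intros D. eapply isd_ext_eq. apply isd_comp. apply D.
  apply isd_plus. apply isd_mult. apply isd_const. apply isd_id. apply isd_const.
  cbv beta; ring.
Qed.

Lemma chi_isd m y : is_derive (chi m) y (chi1 m y).
Proof.
  unfold chi, chi1. eapply isd_ext_eq. apply isd_mult.
  apply (isd_affine psi dpsi m (-1)). apply psi_isd.
  apply (isd_affine psi dpsi (- / m) 2). apply psi_isd.
  cbv beta; ring.
Qed.

Lemma chi1_isd m y : is_derive (chi1 m) y (chi2 m y).
Proof.
  unfold chi1, chi2. eapply isd_ext_eq. apply isd_plus. apply isd_mult. apply isd_mult. apply isd_const.
  apply (isd_affine dpsi ddpsi m (-1)). apply dpsi_isd.
  apply (isd_affine psi dpsi (- / m) 2). apply psi_isd.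
  apply isd_mult.
  apply (isd_affine psi dpsi m (-1)). apply psi_isd.
  apply isd_mult. apply isd_const.
  apply (isd_affine dpsi ddpsi (- / m) 2). apply dpsi_isd.
  cbv beta; ring.
Qed.

Lemma chi_SM m : SMall (chi m).
Proof.
  apply SM_SMall. unfold chi. apply SM_mult. apply open_true.
  apply SMall_SM, SMall_affine, psi_SM. apply SMall_SM, SMall_affine, psi_SM.
Qed.

Lemma chi_supp m y : 3 <= m -> (y < / m \/ 2 * m < y) -> chi m y = 0.
Proof.
  intros Hm [H|H]; unfold chi.
  - rewrite psi_0. ring. apply Rmult_lt_compat_l with (r := m) in H; [|lra].
    rewrite Rinv_r in H by lra. lra.
  - rewrite (psi_0 (- / m * y + 2)). ring.
    assert (y / m > 2). { apply Rmult_gt_reg_l with m. lra. field_simplify; lra. }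
    unfold Rdiv in H0. lra.
Qed.

Section Regions.
Variable m : R.
Hypothesis Hm : 3 <= m.

Lemma reg_facts y : 0 < y -> (y <= 3 / m -> 1 < - / m * y + 2) /\
  (3 / m < y -> 1 < m * y + -1) /\ (y < m -> 1 < - / m * y + 2).
Proof.
  intros Hy. assert (Hm0 : 0 < / m) by (apply Rinv_0_lt_compat; lra).
  assert (Hmi : / m <= / 3) by (apply Rinv_le_contravar; lra).
  repeat split; intros H.
  - assert (y * / m <= 3 / m * / m) by (apply Rmult_le_compat_r; lra).
    assert (A : 3 / m <= 1). { unfold Rdiv. replace 1 with (3 * / 3) by field. apply Rmult_le_compat_l. lra. apply Rinv_le_contravar; lra. }
    assert (3 / m * / m <= 1 * / 3). { apply Rmult_le_compat; try lra; unfold Rdiv; apply Rmult_le_pos; lra. }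
    lra.
  - assert (m * y > m * (3 / m)) by (apply Rmult_lt_compat_l; lra).
    replace (m * (3 / m)) with 3 in H0 by (field; lra). lra.
  - assert (y * / m < m * / m) by (apply Rmult_lt_compat_r; lra).
    rewrite Rinv_r in H0 by lra. lra.
Qed.

Lemma chi_reg1 y : 0 < y -> y <= 3 / m ->
  chi m y = psi (m * y + -1) /\ chi1 m y = m * dpsi (m * y + -1) /\ chi2 m y = m * m * ddpsi (m * y + -1).
Proof.
  intros Hy H. destruct (reg_facts y Hy) as [A _]. specialize (A H).
  unfold chi, chi1, chi2. rewrite (psi_1 (- / m * y + 2)) by lra.
  rewrite (dpsi_out (- / m * y + 2)) by (right; lra). rewrite (ddpsi_out (- / m * y + 2)) by (right; lra).
  repeat split; ring.
Qed.

Lemma chi_reg2 y : 0 < y -> 3 / m < y -> y < m -> chi m y = 1 /\ chi1 m y = 0 /\ chi2 m y = 0.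
Proof.
  intros Hy H1 H2. destruct (reg_facts y Hy) as [_ [A B]]. specialize (A H1). specialize (B H2).
  unfold chi, chi1, chi2. rewrite (psi_1 (- / m * y + 2)) by lra.
  rewrite (dpsi_out (- / m * y + 2)) by (right; lra). rewrite (ddpsi_out (- / m * y + 2)) by (right; lra).
  rewrite (psi_1 (m * y + -1)) by lra.
  rewrite (dpsi_out (m * y + -1)) by (right; lra). rewrite (ddpsi_out (m * y + -1)) by (right; lra).
  repeat split; ring.
Qed.

Lemma chi_reg3 y : 0 < y -> m <= y ->
  chi m y = psi (- / m * y + 2) /\ chi1 m y = (- / m) * dpsi (- / m * y + 2) /\
  chi2 m y = (- / m) * (- / m) * ddpsi (- / m * y + 2).
Proof.
  intros Hy H. destruct (reg_facts y Hy) as [_ [A _]].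
  assert (3 / m < y). { apply Rlt_le_trans with m; auto.
    apply Rmult_lt_reg_l with m. lra. replace (m * (3 / m)) with 3 by (field; lra). nra. }
  specialize (A H0).
  unfold chi, chi1, chi2. rewrite (psi_1 (m * y + -1)) by lra.
  rewrite (dpsi_out (m * y + -1)) by (right; lra). rewrite (ddpsi_out (m * y + -1)) by (right; lra).
  repeat split; ring.
Qed.
End Regions.

Lemma cheb3 k : cheb (S (S (S k))) (1/2) = - cheb k (1/2).
Proof.
  change (cheb (S (S (S k))) (1/2)) with (2 * (1/2) * cheb (S (S k)) (1/2) - cheb (S k) (1/2)).
  change (cheb (S (S k)) (1/2)) with (2 * (1/2) * cheb (S k) (1/2) - cheb k (1/2)).
  field.
Qed.

Definition ys := sqrt (2/3).

Lemma ys_pos : 0 < ys.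
Proof. unfold ys. apply sqrt_lt_R0. lra. Qed.

Lemma ys_sq : ys ^ 2 = 2/3.
Proof. unfold ys. simpl. rewrite Rmult_1_r. apply sqrt_sqrt. lra. Qed.

Lemma ys_sqrt : sqrt (2 + ys ^ 2) = 2 * ys.
Proof. apply sqrt_lem_1. generalize (pow2_ge_0 ys); lra. generalize ys_pos; lra.
  rewrite ys_sq. replace (2 * ys * (2 * ys)) with (4 * ys ^ 2) by ring. rewrite ys_sq. lra. Qed.

Lemma ys_t : ys / sqrt (2 + ys ^ 2) = 1/2.
Proof. rewrite ys_sqrt. field. generalize ys_pos; lra. Qed.

Lemma ftilde_ys : 1 < ftilde ys.
Proof.
  unfold ftilde. rewrite ys_t.
  set (S := sum_f_R0 _ 14).
  assert (HS : 1 < S).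
  { unfold S. cbn [sum_f_R0]. cbv beta. cbn [Nat.mul Nat.add nth f0_coefs].
    repeat rewrite cheb3. cbn [cheb]. lra. }
  assert (atan 1 < atan S) by (apply atan_increasing; auto).
  rewrite atan_1 in H. generalize PI2_3_2. lra.
Qed.

Lemma p1_ys : 1 <= p1 ys.
Proof.
  unfold p1. rewrite ys_sqrt. generalize ys_pos; intro.
  assert (Hs : 0 < sqrt 2) by (apply sqrt_lt_R0; lra).
  assert (sqrt 2 < 2). { rewrite <- (sqrt_square 2) at 2 by lra. apply sqrt_lt_1; lra. }
  replace (2 * ys / (sqrt 2 * ys)) with (2 / sqrt 2) by (field; lra).
  apply Rmult_le_reg_r with (sqrt 2); auto. unfold Rdiv. rewrite Rmult_assoc, Rinv_l; lra.
Qed.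

Lemma isd_cont (f : R -> R) x l : is_derive f x l -> continuity_pt f x.
Proof. intros H. apply is_derive_Reals in H. apply derivable_continuous_pt. exists l. exact H. Qed.

Lemma incr_of_deriv (H d : R -> R) u v : u <= v ->
  (forall x, u <= x <= v -> is_derive H x (d x)) -> (forall x, u <= x <= v -> 0 <= d x) -> H u <= H v.
Proof.
  intros Huv D P. destruct (MVT_gen H u v d) as [c [Hc E]].
  - intros x Hx. rewrite Rmin_left, Rmax_right in Hx by lra. apply D; lra.
  - intros x Hx. rewrite Rmin_left, Rmax_right in Hx by lra. apply (isd_cont H x (d x)). apply D; lra.
  - rewrite Rmin_left, Rmax_right in Hc by lra. specialize (P c Hc).
    assert (0 <= d c * (v - u)) by (apply Rmult_le_pos; lra). lra.
Qed.

Lemma sin_lip u v : Rabs (sin u - sin v) <= Rabs (u - v).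
Proof.
  destruct (MVT_gen sin v u cos) as [c [_ E]].
  - intros x _. apply is_derive_Reals. apply derivable_pt_lim_sin.
  - intros x _. apply continuity_sin.
  - rewrite E, Rabs_mult. generalize (COS_bound c). intros Hc.
    assert (Rabs (cos c) <= 1) by (apply Rabs_le; lra).
    assert (0 <= Rabs (u - v)) by apply Rabs_pos.
    nra.
Qed.

Lemma deriv_nonneg_of_incr (f : R -> R) y l : 0 < y ->
  (forall a b, 0 <= a <= b -> f a <= f b) -> is_derive f y l -> 0 <= l.
Proof.
  intros Hy Hm D. apply is_derive_Reals in D.
  destruct (Rle_dec 0 l) as [|Hl]; auto. exfalso.
  destruct (D (- l / 2) ltac:(lra)) as [d Hd].
  set (h := Rmin (d / 2) (y / 2)).
  assert (Hh : 0 < h) by (unfold h; apply Rmin_pos; generalize (cond_pos d); lra).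
  assert (Hh2 : h <= d / 2) by apply Rmin_l.
  specialize (Hd h ltac:(lra) ltac:(rewrite Rabs_right; lra)).
  assert (f y <= f (y + h)) by (apply Hm; lra).
  assert (0 <= (f (y + h) - f y) / h) by (apply Rdiv_le_0_compat; lra).
  apply Rabs_def2 in Hd. lra.
Qed.

Lemma deriv_zero_at_min (g : R -> R) y l : 0 < y ->
  (forall z, 0 < z -> 0 <= g z) -> g y = 0 -> is_derive g y l -> l = 0.
Proof.
  intros Hy Hg Hgy D. apply is_derive_Reals in D.
  destruct (Rtotal_order l 0) as [Hl|[Hl|Hl]]; auto; exfalso.
  - destruct (D (- l / 2) ltac:(lra)) as [d Hd].
    set (h := Rmin (d / 2) (y / 2)).
    assert (Hh : 0 < h) by (unfold h; apply Rmin_pos; generalize (cond_pos d); lra).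
    assert (Hh2 : h <= d / 2) by apply Rmin_l.
    specialize (Hd h ltac:(lra) ltac:(rewrite Rabs_right; lra)).
    assert (0 <= g (y + h)) by (apply Hg; lra).
    assert (0 <= (g (y + h) - g y) / h) by (apply Rdiv_le_0_compat; lra).
    apply Rabs_def2 in Hd. lra.
  - destruct (D (l / 2) ltac:(lra)) as [d Hd].
    set (h := Rmin (d / 2) (y / 2)).
    assert (Hh : 0 < h) by (unfold h; apply Rmin_pos; generalize (cond_pos d); lra).
    assert (Hh2 : h <= d / 2) by apply Rmin_l.
    assert (Hh3 : h <= y / 2) by apply Rmin_r.
    specialize (Hd (- h) ltac:(lra) ltac:(rewrite Rabs_Ropp, Rabs_right; lra)).
    assert (0 <= g (y + - h)) by (apply Hg; lra).
    assert (0 <= (g (y + - h) - g y) / h) by (apply Rdiv_le_0_compat; lra).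
    replace ((g (y + - h) - g y) / - h) with (- ((g (y + - h) - g y) / h)) in Hd by (field; lra).
    apply Rabs_def2 in Hd. lra.
Qed.

Lemma ball_R (x : R) (e : posreal) (y : R) : Rabs (y - x) < e -> ball x e y.
Proof. intros H. exact H. Qed.
Lemma ball_R' (x : R) (e : posreal) (y : R) : ball x e y -> Rabs (y - x) < e.
Proof. intros H. exact H. Qed.

Lemma bound_near0 (g : R -> R) L : (forall x, 0 < x -> continuous g x) ->
  filterlim g (at_right 0) (locally L) -> exists C, 0 <= C /\ forall y, 0 < y <= 1 -> Rabs (g y) <= C.
Proof.
  intros Hc Hl.
  assert (Hb : at_right 0 (fun y => Rabs (g y - L) < 1)).
  { apply (Hl (fun z => Rabs (z - L) < 1)). exists (mkposreal 1 Rlt_0_1). intros z Hz. exact Hz. }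
  destruct Hb as [d Hd].
  set (a := Rmin (d / 2) 1).
  assert (Ha : 0 < a) by (unfold a; apply Rmin_pos; generalize (cond_pos d); lra).
  assert (Ha2 : a <= d / 2) by apply Rmin_l. assert (Ha1 : a <= 1) by apply Rmin_r.
  destruct (bounded_continuity (K := R_AbsRing) (V := R_NormedModule) g a 1) as [M HM].
  { intros x Hx. apply Hc. lra. }
  exists (Rmax (Rabs L + 1) M). split. { apply Rle_trans with (Rabs L + 1). generalize (Rabs_pos L); lra. apply Rmax_l. }
  intros y Hy. destruct (Rlt_dec y a) as [H|H].
  - assert (Rabs (g y - L) < 1). { apply Hd. apply ball_R. rewrite Rminus_0_r, Rabs_right; lra. lra. }
    apply Rle_trans with (Rabs L + 1). 2: apply Rmax_l.
    generalize (Rabs_triang_inv (g y) L). lra.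
  - apply Rle_trans with M. 2: apply Rmax_r. left. apply (HM y). lra.
Qed.

Lemma exd_cont (f : R -> R) x : ex_derive f x -> continuous f x.
Proof. intros [l H]. apply continuity_pt_filterlim. apply (isd_cont f x l H). Qed.

Definition gdom (A B n y : R) := A / (1 + (n * y) ^ 2) + B / (n * (1 + y ^ 2)).
Definition Gdom (A B n y : R) := A / n * atan (n * y) + B / n * atan y.

Lemma Gdom_isd A B n y : 0 < n -> is_derive (Gdom A B n) y (gdom A B n y).
Proof.
  intros Hn. unfold Gdom, gdom. auto_derive. auto.
  assert (P1 : 0 < 1 + n * y * (n * y * 1)) by (generalize (pow2_ge_0 (n * y)); simpl; lra).
  assert (P2 : 0 < 1 + y * (y * 1)) by (generalize (pow2_ge_0 y); simpl; lra).
  simpl. field. repeat split; lra.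
Qed.

Lemma gdom_cont A B n y : 0 < n -> continuous (gdom A B n) y.
Proof.
  intros Hn. apply exd_cont. unfold gdom.
  assert (P1 : 0 < 1 + (n * y) ^ 2) by (generalize (pow2_ge_0 (n * y)); lra).
  assert (P2 : 0 < 1 + y ^ 2) by (generalize (pow2_ge_0 y); lra).
  auto_derive. repeat split; simpl in *; try lra. apply Rmult_integral_contrapositive; split; lra.
Qed.

Lemma gdom_RInt A B n a b : 0 < n -> 0 <= A -> 0 <= B -> 0 < a -> a <= b ->
  is_RInt (gdom A B n) a b (Gdom A B n b - Gdom A B n a) /\ Gdom A B n b - Gdom A B n a <= 2 * (A + B) / n.
Proof.
  intros Hn HA HB Ha Hab. split.
  - apply (is_RInt_derive (Gdom A B n) (gdom A B n)).
    + intros x _. apply Gdom_isd; auto.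
    + intros x _. apply gdom_cont; auto.
  - unfold Gdom. generalize (atan_bound (n * b)) (atan_bound b) PI_4. intros [_ X1] [_ X2] X3.
    assert (Y1 : 0 < atan (n * a)). { rewrite <- atan_0. apply atan_increasing. nra. }
    assert (Y2 : 0 < atan a). { rewrite <- atan_0. apply atan_increasing. lra. }
    assert (Z : forall c, 0 <= c -> c / n * 2 = 2 * c / n) by (intros; field; lra).
    assert (0 <= A / n) by (apply Rdiv_le_0_compat; lra).
    assert (0 <= B / n) by (apply Rdiv_le_0_compat; lra).
    assert (A / n * atan (n * b) <= A / n * 2) by (apply Rmult_le_compat_l; lra).
    assert (B / n * atan b <= B / n * 2) by (apply Rmult_le_compat_l; lra).
    assert (0 <= A / n * atan (n * a)) by (apply Rmult_le_pos; lra).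
    assert (0 <= B / n * atan a) by (apply Rmult_le_pos; lra).
    replace (2 * (A + B) / n) with (A / n * 2 + B / n * 2) by (field; lra). lra.
Qed.

Lemma gen_int (h : R -> R) (A B n : R) : 0 < n -> 0 <= A -> 0 <= B ->
  (forall a b, 0 < a -> a < b -> ex_RInt h a b) ->
  (forall y, 0 < y -> 0 <= h y <= gdom A B n y) ->
  exists v, is_RInt_gen h (at_right 0) (Rbar_locally p_infty) v /\ v <= 2 * (A + B) / n.
Proof.
  intros Hn HA HB Hex Hb.
  set (M := 2 * (A + B) / n).
  assert (HR : forall a b, 0 < a -> a < b -> 0 <= RInt h a b <= M).
  { intros a b Ha Hab. split.
    - apply RInt_ge_0. lra. apply Hex; auto. intros x Hx. apply Hb. lra.
    - destruct (gdom_RInt A B n a b) as [I1 I2]; auto. lra.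
      apply Rle_trans with (RInt (gdom A B n) a b).
      + apply RInt_le. lra. apply Hex; auto. eexists; exact I1. intros x Hx. apply Hb. lra.
      + rewrite (is_RInt_unique _ _ _ _ I1). exact I2. }
  set (E := fun r => exists a b, 0 < a /\ a < b /\ r = RInt h a b).
  assert (bE : bound E). { exists M. intros r [a [b [Ha [Hab ->]]]]. apply HR; auto. }
  assert (nE : exists r, E r). { exists (RInt h 1 2). exists 1, 2. repeat split; lra. }
  destruct (completeness E bE nE) as [l [Hub Hlub]].
  exists l. split.
  2:{ apply Hlub. intros r [a [b [Ha [Hab ->]]]]. apply HR; auto. }
  intros P [eps HP].
  assert (Hex1 : exists a0 b0, 0 < a0 /\ a0 < b0 /\ l - eps < RInt h a0 b0).
  { destruct (classic (exists a0 b0, 0 < a0 /\ a0 < b0 /\ l - eps < RInt h a0 b0)) as [X|X]; auto.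
    exfalso. assert (U : is_upper_bound E (l - eps)).
    { intros r [a [b [Ha [Hab ->]]]]. destruct (Rle_dec (RInt h a b) (l - eps)) as [Y|Y]; auto.
      exfalso. apply X. exists a, b. repeat split; auto. lra. }
    generalize (Hlub _ U) (cond_pos eps). lra. }
  destruct Hex1 as [a0 [b0 [Ha0 [Hab0 Hl0]]]].
  apply (Filter_prod _ _ _ (fun a => 0 < a < a0) (fun b => b0 < b)).
  - exists (mkposreal a0 Ha0). intros y Hy Hy0. apply ball_R' in Hy. simpl in Hy.
    rewrite Rminus_0_r, Rabs_right in Hy by lra. lra.
  - exists b0. auto.
  - intros a b [Ha1 Ha2] Hbb. simpl. exists (RInt h a b). split.
    + apply (@RInt_correct R_CompleteNormedModule). apply Hex; lra.
    + apply HP. apply ball_R.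
      assert (U1 : RInt h a b <= l) by (apply Hub; exists a, b; repeat split; lra).
      assert (C1 : RInt h a b = RInt h a a0 + RInt h a0 b0 + RInt h b0 b).
      { rewrite <- (RInt_Chasles h a b0 b), <- (RInt_Chasles h a a0 b0); try (apply Hex; lra).
        reflexivity. }
      assert (0 <= RInt h a a0) by (apply HR; lra).
      assert (0 <= RInt h b0 b) by (apply HR; lra).
      apply Rabs_lt_between. lra.
Qed.

Definition ex4' (s : R) := exp (- (s ^ 2) / 4).

Lemma rho_le_sq y : 0 <= rho y <= y ^ 2.
Proof.
  unfold rho. assert (0 < exp (- y ^ 2 / 4)) by apply exp_pos.
  assert (exp (- y ^ 2 / 4) <= 1).
  { rewrite <- exp_0. destruct (Req_dec (y ^ 2) 0) as [E|E].
    - rewrite E. replace (- 0 / 4) with 0 by field. lra.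
    - left. apply exp_increasing. generalize (pow2_ge_0 y). intro. assert (0 < y ^ 2) by lra. lra. }
  generalize (pow2_ge_0 y). intro. split. apply Rmult_le_pos; lra.
  assert (y ^ 2 * exp (- y ^ 2 / 4) <= y ^ 2 * 1) by (apply Rmult_le_compat_l; lra). lra.
Qed.

Lemma rho_decay : exists K, 0 < K /\ forall y, 1 <= y -> rho y <= K / y ^ 3.
Proof.
  destruct (pow_le_exp 3) as [K0 [HK0 B]].
  exists (64 * K0). split. lra. intros y Hy.
  specialize (B (y ^ 2 / 4) ltac:(generalize (pow2_ge_0 y); lra)).
  unfold rho. assert (E : exp (- y ^ 2 / 4) * exp (y ^ 2 / 4) = 1).
  { rewrite <- exp_plus. replace (- y ^ 2 / 4 + y ^ 2 / 4) with 0 by field. apply exp_0. }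
  set (u := exp (y ^ 2 / 4)) in *. set (v := exp (- y ^ 2 / 4)) in *.
  assert (Hu : 0 < u) by apply exp_pos. assert (Hv : 0 < v) by apply exp_pos.
  assert (Hy3 : 0 < y ^ 3) by (apply pow_lt; lra).
  assert (Hy6 : (y ^ 2 / 4) ^ 3 = y ^ 6 / 64) by (simpl; field).
  rewrite Hy6 in B.
  apply Rmult_le_reg_r with (y ^ 3 * u). apply Rmult_lt_0_compat; lra.
  replace (y ^ 2 * v * (y ^ 3 * u)) with (y ^ 5 * (v * u)) by ring. rewrite E.
  replace (64 * K0 / y ^ 3 * (y ^ 3 * u)) with (64 * (K0 * u)) by (field; lra).
  assert (y ^ 5 <= y ^ 6) by (apply Rle_pow; [lra|lia]). lra.
Qed.

Lemma dom_bound (e : R -> R) m A0 B0 K : 3 <= m -> 0 <= A0 -> 0 <= B0 -> 0 < K ->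
  (forall y, 1 <= y -> rho y <= K / y ^ 3) ->
  (forall y, 0 < y <= 3 / m -> Rabs (e y) * y <= A0) ->
  (forall y, 3 / m < y < m -> e y = 0) ->
  (forall y, m <= y -> Rabs (e y) <= B0) ->
  forall y, 0 < y -> 0 <= (e y) ^ 2 * rho y <= gdom (10 * A0 ^ 2) (2 * K * B0 ^ 2) m y.
Proof.
  intros Hm HA HB HK Hrho H1 H2 H3 y Hy.
  generalize (rho_le_sq y) (pow2_ge_0 (e y)). intros [R1 R2] E0.
  assert (G1 : 0 <= 10 * A0 ^ 2 / (1 + (m * y) ^ 2)).
  { apply Rdiv_le_0_compat. generalize (pow2_ge_0 A0); lra. generalize (pow2_ge_0 (m * y)); lra. }
  assert (G2 : 0 <= 2 * K * B0 ^ 2 / (m * (1 + y ^ 2))).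
  { apply Rdiv_le_0_compat. generalize (pow2_ge_0 B0); nra. generalize (pow2_ge_0 y); nra. }
  split. apply Rmult_le_pos; auto. unfold gdom.
  destruct (Rle_dec y (3 / m)) as [C1|C1].
  - specialize (H1 y (conj Hy C1)).
    assert (X : e y ^ 2 * rho y <= A0 ^ 2).
    { apply Rle_trans with (e y ^ 2 * y ^ 2). apply Rmult_le_compat_l; auto.
      replace (e y ^ 2 * y ^ 2) with ((Rabs (e y) * y) ^ 2).
      2:{ rewrite Rpow_mult_distr. rewrite RPow_abs. rewrite Rabs_right. reflexivity. apply Rle_ge, pow2_ge_0. }
      apply pow_incr. split; auto. apply Rmult_le_pos. apply Rabs_pos. lra. }
    assert (Y : (m * y) ^ 2 <= 9).
    { assert (m * y <= 3). { apply Rmult_le_compat_l with (r := m) in C1; [|lra].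
        replace (m * (3 / m)) with 3 in C1 by (field; lra). lra. }
      assert (0 <= m * y) by nra. simpl. nra. }
    assert (A0 ^ 2 <= 10 * A0 ^ 2 / (1 + (m * y) ^ 2)).
    { apply Rmult_le_reg_r with (1 + (m * y) ^ 2). generalize (pow2_ge_0 (m * y)); lra.
      replace (10 * A0 ^ 2 / (1 + (m * y) ^ 2) * (1 + (m * y) ^ 2)) with (10 * A0 ^ 2)
        by (field; generalize (pow2_ge_0 (m * y)); lra).
      generalize (pow2_ge_0 A0) (pow2_ge_0 (m * y)). nra. }
    lra.
  - destruct (Rlt_dec y m) as [C2|C2].
    + rewrite H2 by (split; [apply Rnot_le_lt; exact C1 | exact C2]). replace (0 ^ 2 * rho y) with 0 by ring. lra.
    + assert (Hym : m <= y) by lra. specialize (H3 y Hym). specialize (Hrho y ltac:(lra)).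
      assert (X : e y ^ 2 <= B0 ^ 2).
      { rewrite <- (Rabs_right (e y ^ 2)) by (apply Rle_ge; auto). rewrite <- RPow_abs.
        apply pow_incr. split; auto. apply Rabs_pos. }
      assert (Hy3 : 0 < y ^ 3) by (apply pow_lt; lra).
      assert (X2 : e y ^ 2 * rho y <= B0 ^ 2 * (K / y ^ 3)).
      { apply Rmult_le_compat; auto. }
      assert (X3 : K / y ^ 3 <= 2 * K / (m * (1 + y ^ 2))).
      { apply Rmult_le_reg_r with (y ^ 3 * (m * (1 + y ^ 2))).
        apply Rmult_lt_0_compat; auto. generalize (pow2_ge_0 y); nra.
        replace (K / y ^ 3 * (y ^ 3 * (m * (1 + y ^ 2)))) with (K * (m * (1 + y ^ 2))) by (field; lra).
        replace (2 * K / (m * (1 + y ^ 2)) * (y ^ 3 * (m * (1 + y ^ 2)))) with (K * (2 * y ^ 3))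
          by (field; generalize (pow2_ge_0 y); split; nra).
        apply Rmult_le_compat_l. lra. simpl. nra. }
      assert (B0 ^ 2 * (K / y ^ 3) <= B0 ^ 2 * (2 * K / (m * (1 + y ^ 2)))).
      { apply Rmult_le_compat_l; auto. apply pow2_ge_0. }
      replace (2 * K * B0 ^ 2 / (m * (1 + y ^ 2))) with (B0 ^ 2 * (2 * K / (m * (1 + y ^ 2))))
        by (field; generalize (pow2_ge_0 y); split; nra).
      lra.
Qed.

Lemma cpt_plus (f g : R -> R) x : continuity_pt f x -> continuity_pt g x -> continuity_pt (fun y => f y + g y) x.
Proof. intros A B. exact (continuity_pt_plus f g x A B). Qed.
Lemma cpt_minus (f g : R -> R) x : continuity_pt f x -> continuity_pt g x -> continuity_pt (fun y => f y - g y) x.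
Proof. intros A B. exact (continuity_pt_minus f g x A B). Qed.
Lemma cpt_mult (f g : R -> R) x : continuity_pt f x -> continuity_pt g x -> continuity_pt (fun y => f y * g y) x.
Proof. intros A B. exact (continuity_pt_mult f g x A B). Qed.
Lemma cpt_const (c : R) x : continuity_pt (fun _ => c) x.
Proof. apply continuity_pt_const. intros a b; reflexivity. Qed.
Lemma cpt_id x : continuity_pt (fun y => y) x.
Proof. apply derivable_continuous_pt. apply derivable_pt_id. Qed.
Lemma cpt_inv (f : R -> R) x : continuity_pt f x -> f x <> 0 -> continuity_pt (fun y => / f y) x.
Proof. intros A B. exact (continuity_pt_inv f x A B). Qed.
Lemma cpt_sq (f : R -> R) x : continuity_pt f x -> continuity_pt (fun y => f y ^ 2) x.
Proof. intros A. apply (continuity_pt_comp f (fun u => u ^ 2) x A). apply derivable_continuous_pt, derivable_pt_pow. Qed.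
Lemma cpt_affine (f : R -> R) a b x : (forall z, continuity_pt f z) -> continuity_pt (fun y => f (a * y + b)) x.
Proof.
  intros A. apply (continuity_pt_comp (fun y => a * y + b) f x); auto.
  apply cpt_plus. apply cpt_mult. apply cpt_const. apply cpt_id. apply cpt_const.
Qed.
Lemma cpt_div (f g : R -> R) x : continuity_pt f x -> continuity_pt g x -> g x <> 0 -> continuity_pt (fun y => f y / g y) x.
Proof. intros A B C. apply cpt_mult; auto. apply cpt_inv; auto. Qed.

Lemma abs_mul_le a b A B : Rabs a <= A -> Rabs b <= B -> Rabs (a * b) <= A * B.
Proof. intros H1 H2. rewrite Rabs_mult. apply Rmult_le_compat; auto; apply Rabs_pos. Qed.

Lemma abs3 a b e : Rabs (a - b - e) <= Rabs a + Rabs b + Rabs e.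
Proof.
  unfold Rminus. eapply Rle_trans. apply Rabs_triang. rewrite Rabs_Ropp.
  apply Rplus_le_compat_r. eapply Rle_trans. apply Rabs_triang. rewrite Rabs_Ropp. lra.
Qed.

Lemma reg1_bound w dw c c1 c2 y m C M1 M2 d1 d2 :
  0 < y <= 1 -> 0 <= m -> m * y <= 3 -> 0 <= C -> 0 <= M1 -> 0 <= M2 ->
  Rabs w <= C * y -> Rabs dw <= 2 * C -> 0 <= c <= 1 ->
  c1 = m * d1 -> Rabs d1 <= M1 -> c2 = m * m * d2 -> Rabs d2 <= M2 ->
  Rabs ((1 - c) * w - c2 * w - c1 * ((2 / y - y / 2) * w + 2 * dw)) * y <= C + 9 * M2 * C + 18 * M1 * C.
Proof.
  intros Hy Hm Hmy HC HM1 HM2 Hw Hdw Hc E1 Hd1 E2 Hd2. subst c1 c2.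
  assert (Hmy0 : 0 <= m * y) by (apply Rmult_le_pos; lra).
  assert (T1 : Rabs ((1 - c) * w) * y <= C).
  { rewrite Rabs_mult. rewrite (Rabs_right (1 - c)) by lra.
    assert ((1 - c) * Rabs w <= 1 * (C * y)) by (apply Rmult_le_compat; try lra; apply Rabs_pos).
    assert (C * y * y <= C * 1 * 1) by (apply Rmult_le_compat; try nra). nra. }
  assert (T2 : Rabs (m * m * d2 * w) * y <= 9 * M2 * C).
  { rewrite !Rabs_mult, (Rabs_right m) by lra.
    assert (Rabs d2 * Rabs w <= M2 * (C * y)) by (apply Rmult_le_compat; auto; apply Rabs_pos).
    replace (m * m * Rabs d2 * Rabs w * y) with ((m * y) * (m * (Rabs d2 * Rabs w))) by ring.
    apply Rle_trans with ((m * y) * (m * (M2 * (C * y)))).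
    { apply Rmult_le_compat_l; auto. apply Rmult_le_compat_l; auto. }
    replace ((m * y) * (m * (M2 * (C * y)))) with ((m * y) * (m * y) * (M2 * C)) by ring.
    assert (0 <= M2 * C) by nra. assert ((m * y) * (m * y) <= 9) by nra. nra. }
  assert (Tp : Rabs ((2 / y - y / 2) * w) <= 2 * C).
  { rewrite Rabs_mult. apply Rle_trans with (Rabs (2 / y - y / 2) * (C * y)).
    apply Rmult_le_compat_l; auto. apply Rabs_pos.
    replace (Rabs (2 / y - y / 2) * (C * y)) with (Rabs (2 - y ^ 2 / 2) * C).
    2:{ replace (2 - y ^ 2 / 2) with ((2 / y - y / 2) * y) by (field; lra). rewrite Rabs_mult, (Rabs_right y) by lra. ring. }
    apply Rmult_le_compat_r; auto. apply Rabs_le. split; nra. }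
  assert (T3 : Rabs (m * d1 * ((2 / y - y / 2) * w + 2 * dw)) * y <= 18 * M1 * C).
  { rewrite Rabs_mult. rewrite Rabs_mult, (Rabs_right m) by lra.
    assert (Rabs ((2 / y - y / 2) * w + 2 * dw) <= 6 * C).
    { eapply Rle_trans. apply Rabs_triang. rewrite (Rabs_mult 2), (Rabs_right 2) by lra. lra. }
    replace (m * Rabs d1 * Rabs ((2 / y - y / 2) * w + 2 * dw) * y) with ((m * y) * (Rabs d1 * Rabs ((2 / y - y / 2) * w + 2 * dw))) by ring.
    apply Rle_trans with (3 * (M1 * (6 * C))).
    apply Rmult_le_compat; auto. apply Rmult_le_pos; apply Rabs_pos.
    apply Rmult_le_compat; auto; apply Rabs_pos. lra. }
  eapply Rle_trans. apply Rmult_le_compat_r. lra. apply abs3.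
  rewrite !Rmult_plus_distr_r. lra.
Qed.

Lemma reg3_bound w dw c c1 c2 y m M1 M2 d1 d2 :
  1 <= y -> 1 <= m -> 0 <= M1 -> 0 <= M2 ->
  Rabs w <= 2 / y ^ 2 -> Rabs dw <= 8 -> 0 <= c <= 1 ->
  c1 = (- / m) * d1 -> Rabs d1 <= M1 -> c2 = (- / m) * (- / m) * d2 -> Rabs d2 <= M2 ->
  Rabs ((1 - c) * w - c2 * w - c1 * ((2 / y - y / 2) * w + 2 * dw)) <= 2 + 2 * M2 + 21 * M1.
Proof.
  intros Hy Hm HM1 HM2 Hw Hdw Hc E1 Hd1 E2 Hd2. subst c1 c2.
  assert (Hy2 : 1 <= y ^ 2) by (rewrite <- (pow1 2); apply pow_incr; lra).
  assert (Hy3 : 1 <= y ^ 3) by (rewrite <- (pow1 3); apply pow_incr; lra).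
  assert (Hw2 : Rabs w <= 2). { apply Rle_trans with (2 / y ^ 2); auto.
    unfold Rdiv. assert (/ y ^ 2 <= 1) by (rewrite <- Rinv_1; apply Rinv_le_contravar; lra). lra. }
  assert (Hmi : Rabs (- / m) <= 1).
  { rewrite Rabs_Ropp, Rabs_right by (left; apply Rinv_0_lt_compat; lra). rewrite <- Rinv_1. apply Rinv_le_contravar; lra. }
  assert (T1 : Rabs ((1 - c) * w) <= 2).
  { rewrite Rabs_mult, (Rabs_right (1 - c)) by lra. assert ((1 - c) * Rabs w <= 1 * 2) by (apply Rmult_le_compat; try lra; apply Rabs_pos). lra. }
  assert (T2 : Rabs (- / m * - / m * d2 * w) <= 2 * M2).
  { replace (2 * M2) with (1 * 1 * M2 * 2) by ring. repeat apply abs_mul_le; auto. }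
  assert (Tp : Rabs ((2 / y - y / 2) * w) <= 5).
  { rewrite Rabs_mult. apply Rle_trans with ((2 / y + y / 2) * (2 / y ^ 2)).
    apply Rmult_le_compat; try apply Rabs_pos; auto.
    apply Rabs_le. assert (0 < 2 / y) by (apply Rdiv_lt_0_compat; lra). split; lra.
    replace ((2 / y + y / 2) * (2 / y ^ 2)) with (4 / y ^ 3 + 1 / y) by (field; lra).
    assert (4 / y ^ 3 <= 4). { unfold Rdiv. assert (/ y ^ 3 <= 1) by (rewrite <- Rinv_1; apply Rinv_le_contravar; lra). lra. }
    assert (1 / y <= 1). { unfold Rdiv. rewrite Rmult_1_l, <- Rinv_1. apply Rinv_le_contravar; lra. }
    lra. }
  assert (T3 : Rabs (- / m * d1 * ((2 / y - y / 2) * w + 2 * dw)) <= 21 * M1).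
  { replace (21 * M1) with (1 * M1 * 21) by ring. apply abs_mul_le. apply abs_mul_le; auto.
    eapply Rle_trans. apply Rabs_triang. rewrite (Rabs_mult 2), (Rabs_right 2) by lra. lra. }
  eapply Rle_trans. apply abs3. lra.
Qed.

Definition Pos (x : R) := 0 < x.
Lemma open_Pos : open Pos.
Proof. apply open_gt. Qed.


Lemma gronwall_zero (E dE : R -> R) K a b y1 : a <= y1 <= b -> 0 <= K ->
  (forall x, a <= x <= b -> is_derive E x (dE x)) ->
  (forall x, a <= x <= b -> Rabs (dE x) <= K * E x) ->
  (forall x, a <= x <= b -> 0 <= E x) -> E y1 = 0 -> forall x, a <= x <= b -> E x = 0.
Proof.
  intros Hy HK D B P Z x Hx. apply Rle_antisym; [|apply P; auto].
  destruct (Rle_dec y1 x) as [Hxy|Hxy].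
  - assert (A : - (E y1 * exp (- K * y1)) <= - (E x * exp (- K * x))).
    { apply (incr_of_deriv (fun s => - (E s * exp (- K * s))) (fun s => - ((dE s - K * E s) * exp (- K * s)))); auto.
      - intros s Hs. eapply isd_ext_eq. apply isd_opp. apply isd_mult. apply D; lra.
        apply isd_comp. apply isd_exp. apply isd_mult. apply isd_const. apply isd_id. cbv beta; ring.
      - intros s Hs. generalize (B s ltac:(lra)) (exp_pos (- K * s)). intros B1 B2.
        apply Rabs_le_between in B1. assert ((dE s - K * E s) <= 0) by lra. nra. }
    rewrite Z in A. generalize (exp_pos (- K * x)). intro. nra.
  - assert (A : E x * exp (K * x) <= E y1 * exp (K * y1)).
    { apply (incr_of_deriv (fun s => E s * exp (K * s)) (fun s => (dE s + K * E s) * exp (K * s))). lra.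
      - intros s Hs. eapply isd_ext_eq. apply isd_mult. apply D; lra.
        apply isd_comp. apply isd_exp. apply isd_mult. apply isd_const. apply isd_id. cbv beta; ring.
      - intros s Hs. generalize (B s ltac:(lra)) (exp_pos (K * s)). intros B1 B2.
        apply Rabs_le_between in B1. assert (0 <= (dE s + K * E s)) by lra. nra. }
    rewrite Z in A. generalize (exp_pos (K * x)). intro. nra.
Qed.

Section F.
Variable f0 : R -> R.
Hypothesis Hsm : smooth_closed_halfline f0.
Hypothesis Hode : forall y, 0 < y ->
     Derive_n f0 2 y + (2 / y - y / 2) * Derive f0 y - sin (2 * f0 y) / y ^ 2 = 0.
Hypothesis H0 : f0 0 = 0.
Hypothesis Hinf : exists L, filterlim f0 (Rbar_locally p_infty) (locally L).
Hypothesis Hmono : monotone_halfline f0.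
Hypothesis Hclose : weighted_norm_le (fun y => f0 y - ftilde y) (5 / 10000).

Definition df := Derive f0.
Definition ddf := Derive df.

Lemma f0_SM : SM Pos f0.
Proof. intros n k x _ Hx. apply (proj1 Hsm). exact Hx. Qed.
Lemma df_SM : SM Pos df.
Proof. apply SM_Derive, f0_SM. Qed.
Lemma ddf_SM : SM Pos ddf.
Proof. apply SM_Derive, df_SM. Qed.

Lemma SM_exd U f x : SM U f -> U x -> ex_derive f x.
Proof. intros F Hx. apply exdn1. apply (F 1%nat 1%nat x); auto. Qed.

Lemma f0_isd y : 0 < y -> is_derive f0 y (df y).
Proof. intros Hy. apply Derive_correct. apply (SM_exd Pos). apply f0_SM. exact Hy. Qed.
Lemma df_isd y : 0 < y -> is_derive df y (ddf y).
Proof. intros Hy. apply Derive_correct. apply (SM_exd Pos). apply df_SM. exact Hy. Qed.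
Lemma ddf_isd y : 0 < y -> is_derive ddf y (Derive ddf y).
Proof. intros Hy. apply Derive_correct. apply (SM_exd Pos). apply ddf_SM. exact Hy. Qed.

Lemma ode y : 0 < y -> ddf y = sin (2 * f0 y) / y ^ 2 - (2 / y - y / 2) * df y.
Proof.
  intros Hy. generalize (Hode y Hy). intro E.
  assert (Derive_n f0 2 y = ddf y).
  { unfold ddf, df. simpl. apply Derive_ext. intro t. reflexivity. }
  rewrite H in E. change (Derive f0 y) with (df y) in E. lra.
Qed.

Lemma f0_cont_at0 : filterlim f0 (at_right 0) (locally 0).
Proof. generalize (proj2 (proj2 Hsm)). rewrite H0. auto. Qed.

Lemma f0_ys : 1/2 < f0 ys.
Proof.
  destruct Hclose as [a [b [Hab [Ha Hb]]]].
  assert (0 <= b) by (generalize (Hb 1 ltac:(lra)) (Rabs_pos (p3 1 * Derive (fun y => f0 y - ftilde y) 1)); lra).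
  specialize (Ha ys ys_pos). rewrite Rabs_mult in Ha.
  generalize p1_ys ftilde_ys; intros P F.
  rewrite (Rabs_right (p1 ys)) in Ha by lra.
  assert (Rabs (f0 ys - ftilde ys) <= a).
  { apply Rle_trans with (p1 ys * Rabs (f0 ys - ftilde ys)); auto.
    generalize (Rabs_pos (f0 ys - ftilde ys)); nra. }
  apply Rabs_le_between in H1. lra.
Qed.

Lemma f0_incr : forall a b, 0 <= a <= b -> f0 a <= f0 b.
Proof.
  destruct Hmono as [H|H]; auto. exfalso.
  generalize (H 0 ys ltac:(generalize ys_pos; lra)) f0_ys. rewrite H0. lra.
Qed.

Lemma df_nonneg y : 0 < y -> 0 <= df y.
Proof. intros Hy. apply (deriv_nonneg_of_incr f0 y); auto. apply f0_incr. apply f0_isd; auto. Qed.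


Definition ex4 (s : R) := exp (- (s ^ 2) / 4).
Lemma ex4_pos s : 0 < ex4 s.
Proof. apply exp_pos. Qed.
Lemma rho_ex4 s : rho s = s ^ 2 * ex4 s.
Proof. reflexivity. Qed.

Lemma ex4_isd s : is_derive ex4 s (- s / 2 * ex4 s).
Proof. unfold ex4. auto_derive. auto.
  assert (E : - (s * (s * 1)) * / 4 = - (s ^ 2) / 4) by (simpl; field). rewrite E. field. Qed.

Lemma rho_isd s : is_derive rho s (2 * s * ex4 s + s ^ 2 * (- s / 2 * ex4 s)).
Proof.
  eapply isd_ext_eq. apply (isd_mult (fun s => s ^ 2) ex4).
  auto_derive. auto. reflexivity. apply ex4_isd. simpl. ring.
Qed.

Lemma ex4_le s : ex4 s <= 1 / (1 + s ^ 2 / 4).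
Proof.
  unfold ex4. assert (E : exp (- (s ^ 2) / 4) * exp (s ^ 2 / 4) = 1).
  { rewrite <- exp_plus. replace (- (s ^ 2) / 4 + s ^ 2 / 4) with 0 by field. apply exp_0. }
  generalize (exp_ineq1_le (s ^ 2 / 4)) (pow2_ge_0 s) (exp_pos (- (s ^ 2) / 4)). intros A B C.
  apply Rmult_le_reg_r with (1 + s ^ 2 / 4). lra.
  replace (1 / (1 + s ^ 2 / 4) * (1 + s ^ 2 / 4)) with 1 by (field; lra).
  rewrite <- E. apply Rmult_le_compat_l; lra.
Qed.

Lemma rho_le4 s : rho s <= 4.
Proof.
  rewrite rho_ex4. generalize (ex4_le s) (pow2_ge_0 s) (ex4_pos s). intros A B C.
  apply Rle_trans with (s ^ 2 * (1 / (1 + s ^ 2 / 4))). apply Rmult_le_compat_l; lra.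
  apply Rmult_le_reg_r with (1 + s ^ 2 / 4). lra.
  replace (s ^ 2 * (1 / (1 + s ^ 2 / 4)) * (1 + s ^ 2 / 4)) with (s ^ 2) by (field; lra). lra.
Qed.

Lemma Pw_isd s : 0 < s -> is_derive (fun s => rho s * df s) s (ex4 s * sin (2 * f0 s)).
Proof.
  intros Hs. eapply isd_ext_eq. apply isd_mult. apply rho_isd. apply df_isd; auto.
  rewrite (ode s Hs). rewrite rho_ex4. field. lra.
Qed.

Lemma df_decay y : 0 < y -> df y <= 2 / y ^ 3.
Proof.
  intros Hy. destruct (Rle_dec (df y) (2 / y ^ 3)) as [|Hd]; auto. exfalso.
  set (H := fun s => rho s * df s - 2 / y * ex4 s).
  assert (HH : forall z, y <= z -> H y <= H z).
  { intros z Hz. apply (incr_of_deriv H (fun s => ex4 s * (sin (2 * f0 s) + s / y))); auto.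
    - intros x Hx. unfold H. eapply isd_ext_eq. apply isd_minus. apply Pw_isd. lra.
      apply isd_mult. apply isd_const. apply ex4_isd. cbv beta. field. lra.
    - intros x Hx. apply Rmult_le_pos. left; apply ex4_pos.
      generalize (SIN_bound (2 * f0 x)). assert (1 <= x / y).
      { apply Rmult_le_reg_r with y; auto. unfold Rdiv. rewrite Rmult_assoc, Rinv_l; lra. }
      lra. }
  set (d := H y).
  assert (Hdp : 0 < d).
  { unfold d, H. rewrite rho_ex4. assert (df y > 2 / y ^ 3) by lra.
    assert (y ^ 2 * ex4 y * df y > y ^ 2 * ex4 y * (2 / y ^ 3)).
    { apply Rmult_gt_compat_l; auto. apply Rmult_lt_0_compat. apply pow_lt; auto. apply ex4_pos. }
    replace (y ^ 2 * ex4 y * (2 / y ^ 3)) with (2 / y * ex4 y) in H2 by (field; lra). lra. }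
  assert (Hdf : forall z, y <= z -> d / 4 <= df z).
  { intros z Hz. specialize (HH z Hz). fold d in HH. unfold H in HH.
    assert (0 <= 2 / y * ex4 z) by (apply Rmult_le_pos; [apply Rdiv_le_0_compat; lra| left; apply ex4_pos]).
    assert (d <= rho z * df z) by lra.
    generalize (rho_le4 z) (df_nonneg z ltac:(lra)). intros A B.
    assert (rho z * df z <= 4 * df z) by (apply Rmult_le_compat_r; auto). lra. }
  destruct Hinf as [L HL].
  assert (HM : Rbar_locally p_infty (fun z => Rabs (f0 z - L) < 1)).
  { apply (HL (fun w => Rabs (w - L) < 1)). exists (mkposreal 1 Rlt_0_1). intros w Hw. exact Hw. }
  destruct HM as [M HM].
  set (z1 := Rmax M y + 1). set (z2 := z1 + 8 / d).
  assert (Hz1 : M < z1 /\ y < z1) by (unfold z1; split; [generalize (Rmax_l M y)|generalize (Rmax_r M y)]; lra).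
  assert (H8 : 0 < 8 / d) by (apply Rdiv_lt_0_compat; lra).
  assert (Hg : f0 z1 - d / 4 * z1 <= f0 z2 - d / 4 * z2).
  { apply (incr_of_deriv (fun s => f0 s - d / 4 * s) (fun s => df s - d / 4)). unfold z2; lra.
    - intros x Hx. eapply isd_ext_eq. apply isd_minus. apply f0_isd. lra.
      apply isd_mult. apply isd_const. apply isd_id. cbv beta; ring.
    - intros x Hx. generalize (Hdf x ltac:(lra)). lra. }
  generalize (HM z1 ltac:(lra)) (HM z2 ltac:(unfold z2; lra)). intros A B.
  apply Rabs_def2 in A. apply Rabs_def2 in B.
  assert (d / 4 * (z2 - z1) = 2) by (unfold z2; field; lra). lra.
Qed.


Lemma energy_bound a b s c : 0 < a -> a <= s <= b -> sin (2 * c) = 0 ->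
  Rabs (2 * (f0 s - c) * df s + 2 * df s * ddf s) <=
  (1 + 2 / a ^ 2 + 2 * (2 / a + b / 2)) * ((f0 s - c) ^ 2 + df s ^ 2).
Proof.
  intros Ha Hs Hc. rewrite (ode s ltac:(lra)).
  set (g := f0 s - c). set (v := df s).
  assert (HA : Rabs (sin (2 * f0 s)) <= 2 * Rabs g).
  { replace (sin (2 * f0 s)) with (sin (2 * f0 s) - sin (2 * c)) by lra.
    eapply Rle_trans. apply sin_lip. replace (2 * f0 s - 2 * c) with (2 * g) by (unfold g; ring).
    rewrite Rabs_mult, Rabs_right; lra. }
  set (q := / s ^ 2). assert (Hq0 : 0 < q) by (apply Rinv_0_lt_compat, pow_lt; lra).
  assert (Hq : q <= 1 / a ^ 2).
  { unfold q. unfold Rdiv. rewrite Rmult_1_l. apply Rinv_le_contravar. apply pow_lt; lra. apply pow_incr; lra. }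
  set (p := 2 / s - s / 2).
  assert (Hp : Rabs p <= 2 / a + b / 2).
  { assert (2 / s <= 2 / a). { unfold Rdiv. apply Rmult_le_compat_l. lra. apply Rinv_le_contravar; lra. }
    assert (0 < 2 / s) by (apply Rdiv_lt_0_compat; lra).
    assert (0 < 2 / a) by (apply Rdiv_lt_0_compat; lra).
    apply Rabs_le. unfold p. split; lra. }
  set (S := sin (2 * f0 s)).
  replace (2 * g * v + 2 * v * (S / s ^ 2 - p * v)) with (2 * (g * v) + 2 * (v * S * q) - 2 * (p * (v * v))) by (unfold q; field; lra).
  set (G := Rabs g). set (V := Rabs v). set (As := Rabs S). set (Ps := Rabs p).
  assert (HG : 0 <= G) by apply Rabs_pos. assert (HV : 0 <= V) by apply Rabs_pos.
  assert (HAs : 0 <= As) by apply Rabs_pos. assert (HPs : 0 <= Ps) by apply Rabs_pos.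
  assert (T : Rabs (2 * (g * v) + 2 * (v * S * q) - 2 * (p * (v * v))) <= 2 * (G * V) + 2 * (V * As * q) + 2 * (Ps * (V * V))).
  { unfold Rminus. eapply Rle_trans. apply Rabs_triang. eapply Rle_trans. apply Rplus_le_compat_r. apply Rabs_triang.
    rewrite Rabs_Ropp. rewrite !Rabs_mult. rewrite (Rabs_right 2) by lra. rewrite (Rabs_right q) by lra. fold G V As Ps. lra. }
  assert (E1 : g ^ 2 = G * G) by (unfold G; rewrite <- Rabs_mult; rewrite Rabs_right; [ring | nra]).
  assert (E2 : v ^ 2 = V * V) by (unfold V; rewrite <- Rabs_mult; rewrite Rabs_right; [ring | nra]).
  rewrite E1, E2. fold S in HA. fold As in HA. fold G in HA. fold Ps in Hp.
  set (W := G * G + V * V).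
  assert (HGG : 0 <= G * G) by (apply Rmult_le_pos; lra). assert (HVV : 0 <= V * V) by (apply Rmult_le_pos; lra).
  assert (HW : 0 <= W) by (unfold W; lra).
  assert (HGV : 0 <= (G - V) ^ 2) by apply pow2_ge_0.
  assert (I1 : 2 * (G * V) <= W) by (unfold W; simpl in HGV; lra).
  assert (I2 : 2 * (V * As * q) <= 2 / a ^ 2 * W).
  { apply Rle_trans with (2 * q * W).
    - apply Rle_trans with (2 * (V * (2 * G) * q)).
      + apply Rmult_le_compat_l. lra. apply Rmult_le_compat_r. lra. apply Rmult_le_compat_l; lra.
      + unfold W. assert (0 <= q * (G - V) ^ 2) by (apply Rmult_le_pos; [lra|apply pow2_ge_0]).
        simpl in H. lra.
    - apply Rmult_le_compat_r; auto. unfold Rdiv in *. lra. }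
  assert (I3 : 2 * (Ps * (V * V)) <= 2 * (2 / a + b / 2) * W).
  { assert (V * V <= W) by (unfold W; lra).
    assert (Ps * (V * V) <= (2 / a + b / 2) * W).
    { apply Rmult_le_compat; auto. }
    lra. }
  lra.
Qed.

Lemma df_pos y1 : 0 < y1 -> 0 < df y1.
Proof.
  intros Hy1. destruct (df_nonneg y1 Hy1) as [|Hz]; auto. exfalso. symmetry in Hz.
  assert (Hdd : ddf y1 = 0).
  { apply (deriv_zero_at_min df y1); auto. apply df_nonneg. apply df_isd; auto. }
  set (c := f0 y1).
  assert (Hc : sin (2 * c) = 0).
  { generalize (ode y1 Hy1). rewrite Hdd, Hz. intro E.
    assert (sin (2 * f0 y1) / y1 ^ 2 = 0) by lra.
    unfold Rdiv in H. apply Rmult_integral in H. destruct H as [H|H]; auto.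
    exfalso. generalize (Rinv_neq_0_compat (y1 ^ 2) ltac:(apply pow_nonzero; lra)). auto. }
  assert (Hconst : forall a, 0 < a <= y1 -> forall x, a <= x <= y1 + ys -> f0 x = c).
  { intros a Ha x Hx.
    set (b := y1 + ys).
    assert (HE := gronwall_zero (fun s => (f0 s - c) ^ 2 + df s ^ 2)
                   (fun s => 2 * (f0 s - c) * df s + 2 * df s * ddf s)
                   (1 + 2 / a ^ 2 + 2 * (2 / a + b / 2)) a b y1).
    assert (HK : 0 <= 1 + 2 / a ^ 2 + 2 * (2 / a + b / 2)).
    { assert (0 < 2 / a ^ 2) by (apply Rdiv_lt_0_compat; [lra|apply pow_lt; lra]).
      assert (0 < 2 / a) by (apply Rdiv_lt_0_compat; lra). generalize ys_pos. unfold b. lra. }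
    specialize (HE ltac:(generalize ys_pos; unfold b; lra) HK).
    assert (Hx0 : (f0 x - c) ^ 2 + df x ^ 2 = 0).
    { apply HE; auto.
      - intros s Hs. eapply isd_ext_eq. apply isd_plus.
        apply (isd_comp (fun u => u ^ 2) (fun s => f0 s - c)). auto_derive; auto.
        apply isd_minus. apply f0_isd; lra. apply isd_const.
        apply (isd_comp (fun u => u ^ 2)). auto_derive; auto. apply df_isd; lra.
        cbv beta. simpl. ring.
      - intros s Hs. apply energy_bound; auto. lra.
      - intros s Hs. generalize (pow2_ge_0 (f0 s - c)) (pow2_ge_0 (df s)). lra.
      - unfold c. rewrite Hz. simpl. ring. }
    generalize (pow2_ge_0 (f0 x - c)) (pow2_ge_0 (df x)). intros A B.
    assert ((f0 x - c) ^ 2 = 0) by lra. destruct (Req_dec (f0 x - c) 0) as [Q|Q]; [lra|]. exfalso. apply (pow_nonzero _ 2 Q). auto. }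
  assert (Hys : f0 ys = c).
  { generalize ys_pos (Rmin_l y1 ys) (Rmin_r y1 ys). intros.
    apply (Hconst (Rmin y1 ys)). split; [apply Rmin_pos|]; lra. lra. }
  generalize f0_cont_at0. intro Hl.
  assert (Hb : at_right 0 (fun y => Rabs (f0 y - 0) < 1/4)).
  { apply (Hl (fun z => Rabs (z - 0) < 1/4)). exists (mkposreal (1/4) ltac:(lra)). intros z Hz0. exact Hz0. }
  destruct Hb as [d Hd].
  set (a := Rmin (d / 2) y1).
  assert (Ha : 0 < a) by (unfold a; apply Rmin_pos; generalize (cond_pos d); lra).
  assert (Ha2 : a <= d / 2) by apply Rmin_l. assert (Ha1 : a <= y1) by apply Rmin_r.
  assert (A1 : Rabs (f0 a - 0) < 1/4).
  { apply Hd. apply ball_R. rewrite Rminus_0_r, Rabs_right; generalize (cond_pos d); lra. lra. }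
  rewrite (Hconst a ltac:(lra) a ltac:(generalize ys_pos; lra)) in A1.
  generalize f0_ys. rewrite Hys. intro. rewrite Rminus_0_r, Rabs_right in A1; lra.
Qed.

Definition W (y : R) := y * df y.
Definition dW (y : R) := df y + y * ddf y.

Lemma W_isd y : 0 < y -> is_derive W y (dW y).
Proof. intros Hy. unfold W, dW. eapply isd_ext_eq. apply isd_mult. apply isd_id. apply df_isd; auto. cbv beta; ring. Qed.

Lemma DW y : 0 < y -> Derive W y = dW y.
Proof. intros Hy. apply is_derive_unique. apply W_isd; auto. Qed.

Lemma W_SM : SM Pos W.
Proof. unfold W. apply SM_mult. apply open_Pos. apply SM_id. apply df_SM. Qed.

Lemma isd_sin x : is_derive sin x (cos x).
Proof. apply is_derive_Reals. apply derivable_pt_lim_sin. Qed.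

Lemma loc_pos (P : R -> Prop) y : 0 < y -> (forall z, 0 < z -> P z) -> locally y P.
Proof. intros Hy H. apply locally_interval with 0 p_infty. exact Hy. exact I. intros z Hz _. apply H. exact Hz. Qed.

Lemma rhoW_isd y : 0 < y ->
  is_derive (fun z => rho z * Derive W z) y (rho y * W y + 2 * rho y * cos (2 * f0 y) * W y / y ^ 2).
Proof.
  intros Hy.
  apply is_derive_ext_loc with (fun z => (z ^ 2 / 2 - 1) * (rho z * df z) + rho z * sin (2 * f0 z) * / z).
  { apply loc_pos; auto. intros z Hz. cbv beta. rewrite DW by auto. unfold dW. rewrite (ode z Hz). match goal with |- ?a = ?b => change (@eq R a b) end. field. lra. }
  eapply isd_ext_eq. apply isd_plus. apply isd_mult.
  { auto_derive. auto. reflexivity. }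
  apply isd_mult. apply rho_isd. apply df_isd; auto.
  apply isd_mult. apply isd_mult. apply rho_isd.
  apply (isd_comp sin (fun z => 2 * f0 z)). apply isd_sin.
  apply isd_mult. apply isd_const. apply f0_isd; auto.
  apply isd_inv. apply isd_id. lra.
  cbv beta. rewrite (ode y Hy). unfold W. rewrite rho_ex4. simpl. field. lra.
Qed.

Definition err2 m y := (1 - chi m y) * W y - chi2 m y * W y - chi1 m y * ((2 / y - y / 2) * W y + 2 * dW y).

Lemma rho_pos y : 0 < y -> 0 < rho y.
Proof. intros Hy. rewrite rho_ex4. apply Rmult_lt_0_compat. apply pow_lt; auto. apply ex4_pos. Qed.

Lemma A0_phi m y : 0 < y ->
  A0 f0 (fun z => chi m z * W z) y - (-1 * W y) = err2 m y.
Proof.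
  intros Hy. unfold A0.
  assert (D : Derive (fun z => rho z * Derive (fun z0 => chi m z0 * W z0) z) y =
    chi2 m y * (rho y * W y) + chi1 m y * ((2 * y * ex4 y + y ^ 2 * (- y / 2 * ex4 y)) * W y + rho y * dW y)
    + chi1 m y * (rho y * dW y) + chi m y * (rho y * W y + 2 * rho y * cos (2 * f0 y) * W y / y ^ 2)).
  { apply is_derive_unique.
    apply is_derive_ext_loc with (fun z => chi1 m z * (rho z * W z) + chi m z * (rho z * Derive W z)).
    { apply loc_pos; auto. intros z Hz. cbv beta.
      match goal with |- ?a = ?b => change (@eq R a b) end.
      assert (E : Derive (fun z0 => chi m z0 * W z0) z = chi1 m z * W z + chi m z * dW z).
      2:{ rewrite E.
      rewrite DW by auto. ring. }
      apply is_derive_unique.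
      eapply isd_ext_eq. apply isd_mult. apply chi_isd. apply W_isd; auto. ring. }
    eapply isd_ext_eq. apply isd_plus. apply isd_mult. apply chi1_isd.
    apply isd_mult. apply rho_isd. apply W_isd; auto.
    apply isd_mult. apply chi_isd. apply rhoW_isd; auto.
    cbv beta. replace (Derive W y) with (dW y) by (symmetry; apply DW; auto). match goal with |- ?a = ?b => change (@eq R a b) end. ring. }
  rewrite D. unfold err2. generalize (rho_pos y Hy). rewrite rho_ex4. intro Hr.
  assert (ex4 y <> 0) by (generalize (ex4_pos y); lra).
  field. split; auto. lra.
Qed.


Lemma near0_bounds : exists C, 0 <= C /\ forall y, 0 < y <= 1 -> Rabs (df y) <= C /\ Rabs (ddf y) <= C.
Proof.
  destruct (proj1 (proj2 Hsm) 1%nat) as [L1 HL1].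
  destruct (proj1 (proj2 Hsm) 2%nat) as [L2 HL2].
  destruct (bound_near0 df L1) as [C1 [HC1 B1]].
  { intros x Hx. apply exd_cont. exists (ddf x). apply df_isd; auto. }
  { apply (filterlim_ext (Derive_n f0 1)). intros x. change (Derive (Derive_n f0 0) x = df x).
    apply Derive_ext. intro t. reflexivity. exact HL1. }
  destruct (bound_near0 ddf L2) as [C2 [HC2 B2]].
  { intros x Hx. apply exd_cont. exists (Derive ddf x). apply ddf_isd; auto. }
  { apply (filterlim_ext (Derive_n f0 2)). intros x. change (Derive (Derive_n f0 1) x = ddf x).
    apply Derive_ext. intro t. change (Derive (Derive_n f0 0) t = df t). apply Derive_ext. intro; reflexivity. exact HL2. }
  exists (Rmax C1 C2). split. apply Rle_trans with C1; auto; apply Rmax_l.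
  intros y Hy. split. apply Rle_trans with C1. apply B1; auto. apply Rmax_l.
  apply Rle_trans with C2. apply B2; auto. apply Rmax_r.
Qed.

Lemma W_bounds0 : exists C, 0 <= C /\ forall y, 0 < y <= 1 -> Rabs (W y) <= C * y /\ Rabs (dW y) <= 2 * C.
Proof.
  destruct near0_bounds as [C [HC B]]. exists C. split; auto. intros y Hy. destruct (B y Hy) as [B1 B2].
  unfold W, dW. split.
  - rewrite Rabs_mult, Rabs_right by lra. rewrite Rmult_comm. apply Rmult_le_compat_r; lra.
  - eapply Rle_trans. apply Rabs_triang. rewrite Rabs_mult, (Rabs_right y) by lra.
    assert (y * Rabs (ddf y) <= 1 * C) by (apply Rmult_le_compat; try lra; apply Rabs_pos). lra.
Qed.

Lemma W_bounds1 y : 1 <= y -> 0 <= W y <= 2 / y ^ 2 /\ Rabs (dW y) <= 8.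
Proof.
  intros Hy. generalize (df_nonneg y ltac:(lra)) (df_decay y ltac:(lra)). intros D1 D2.
  assert (Hy3 : 0 < y ^ 3) by (apply pow_lt; lra).
  unfold W, dW. split. split. apply Rmult_le_pos; lra.
  - apply Rle_trans with (y * (2 / y ^ 3)). apply Rmult_le_compat_l; lra. right. field. lra.
  - rewrite (ode y ltac:(lra)).
    replace (df y + y * (sin (2 * f0 y) / y ^ 2 - (2 / y - y / 2) * df y)) with
      (sin (2 * f0 y) / y + (y ^ 2 / 2 - 1) * df y) by (field; lra).
    eapply Rle_trans. apply Rabs_triang.
    assert (Rabs (sin (2 * f0 y) / y) <= 1).
    { unfold Rdiv. rewrite Rabs_mult. rewrite (Rabs_right (/ y)) by (left; apply Rinv_0_lt_compat; lra).
      generalize (SIN_bound (2 * f0 y)). intro. assert (Rabs (sin (2 * f0 y)) <= 1) by (apply Rabs_le; lra).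
      assert (/ y <= 1). { rewrite <- Rinv_1. apply Rinv_le_contravar; lra. }
      assert (0 < / y) by (apply Rinv_0_lt_compat; lra).
      generalize (Rabs_pos (sin (2 * f0 y))). nra. }
    assert (Rabs ((y ^ 2 / 2 - 1) * df y) <= 7).
    { rewrite Rabs_mult. rewrite (Rabs_right (df y)) by lra.
      assert (Rabs (y ^ 2 / 2 - 1) <= y ^ 2 / 2 + 1).
      { apply Rabs_le. generalize (pow2_ge_0 y). lra. }
      apply Rle_trans with ((y ^ 2 / 2 + 1) * (2 / y ^ 3)).
      apply Rmult_le_compat; auto. apply Rabs_pos.
      replace ((y ^ 2 / 2 + 1) * (2 / y ^ 3)) with (1 / y + 2 / y ^ 3) by (field; lra).
      assert (1 / y <= 1). { unfold Rdiv. rewrite Rmult_1_l, <- Rinv_1. apply Rinv_le_contravar; lra. }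
      assert (2 / y ^ 3 <= 2). { assert (1 <= y ^ 3) by (rewrite <- (pow1 3); apply pow_incr; lra).
        unfold Rdiv. assert (/ y ^ 3 <= 1) by (rewrite <- Rinv_1; apply Rinv_le_contravar; lra). lra. }
      lra. }
    lra.
Qed.


Lemma cont_psi z : continuity_pt psi z.
Proof. apply (isd_cont psi z _ (psi_isd z)). Qed.
Lemma cont_dpsi z : continuity_pt dpsi z.
Proof. apply (isd_cont dpsi z _ (dpsi_isd z)). Qed.
Lemma cont_ddpsi z : continuity_pt ddpsi z.
Proof. destruct (SMall_exd ddpsi z ddpsi_SM) as [l H]. apply (isd_cont ddpsi z l H). Qed.

Ltac cpt := repeat first [ apply cpt_const | apply cpt_id
  | apply (cpt_affine psi); apply cont_psi | apply (cpt_affine dpsi); apply cont_dpsi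
  | apply (cpt_affine ddpsi); apply cont_ddpsi
  | apply cpt_plus | apply cpt_minus | apply cpt_mult | apply cpt_sq ].

Lemma cont_chi m y : continuity_pt (chi m) y.
Proof. unfold chi. cpt. Qed.
Lemma cont_chi1 m y : continuity_pt (chi1 m) y.
Proof. unfold chi1. cpt. Qed.
Lemma cont_chi2 m y : continuity_pt (chi2 m) y.
Proof. unfold chi2. cpt. Qed.
Lemma cont_W y : 0 < y -> continuity_pt W y.
Proof. intros Hy. apply (isd_cont W y _ (W_isd y Hy)). Qed.
Lemma cont_df y : 0 < y -> continuity_pt df y.
Proof. intros Hy. apply (isd_cont df y _ (df_isd y Hy)). Qed.
Lemma cont_ddf y : 0 < y -> continuity_pt ddf y.
Proof. intros Hy. apply (isd_cont ddf y _ (ddf_isd y Hy)). Qed.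
Lemma cont_dW y : 0 < y -> continuity_pt dW y.
Proof. intros Hy. unfold dW. apply cpt_plus. apply cont_df; auto. apply cpt_mult. apply cpt_id. apply cont_ddf; auto. Qed.
Lemma cont_rho y : continuity_pt rho y.
Proof. apply (isd_cont rho y _ (rho_isd y)). Qed.

Lemma cont_err2 m y : 0 < y -> continuity_pt (fun y => err2 m y ^ 2 * rho y) y.
Proof.
  intros Hy. apply cpt_mult; [|apply cont_rho]. apply cpt_sq. unfold err2.
  apply cpt_minus. apply cpt_minus. apply cpt_mult. apply cpt_minus. apply cpt_const. apply cont_chi. apply cont_W; auto.
  apply cpt_mult. apply cont_chi2. apply cont_W; auto.
  apply cpt_mult. apply cont_chi1. apply cpt_plus. apply cpt_mult. apply cpt_minus.
  apply cpt_div. apply cpt_const. apply cpt_id. lra. apply cpt_div. apply cpt_id. apply cpt_const. lra.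
  apply cont_W; auto. apply cpt_mult. apply cpt_const. apply cont_dW; auto.
Qed.

Lemma cont_e1 m y : 0 < y -> continuity_pt (fun y => ((fun y => chi m y * W y) y - W y) ^ 2 * rho y) y.
Proof.
  intros Hy. apply cpt_mult; [|apply cont_rho]. apply cpt_sq. apply cpt_minus.
  apply cpt_mult. apply cont_chi. apply cont_W; auto. apply cont_W; auto.
Qed.


Lemma chi_range m y : 0 <= chi m y <= 1.
Proof.
  unfold chi. generalize (psi_range (m * y + -1)) (psi_range (- / m * y + 2)). intros A B.
  split. apply Rmult_le_pos; lra.
  assert (psi (m * y + -1) * psi (- / m * y + 2) <= 1 * 1) by (apply Rmult_le_compat; lra). lra.
Qed.

Lemma m_facts m : 3 <= m -> 3 / m <= 1 /\ (forall y, 0 < y <= 3 / m -> m * y <= 3).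
Proof.
  intros Hm. split.
  - unfold Rdiv. replace 1 with (3 * / 3) by field. apply Rmult_le_compat_l. lra. apply Rinv_le_contravar; lra.
  - intros y [_ Hy]. apply Rmult_le_compat_l with (r := m) in Hy; [|lra].
    replace (m * (3 / m)) with 3 in Hy by (field; lra). lra.
Qed.

Lemma e1_dom m C : 3 <= m -> 0 <= C -> (forall y, 0 < y <= 1 -> Rabs (W y) <= C * y /\ Rabs (dW y) <= 2 * C) ->
  (forall y, 0 < y <= 3 / m -> Rabs (chi m y * W y - W y) * y <= C) /\
  (forall y, 3 / m < y < m -> chi m y * W y - W y = 0) /\
  (forall y, m <= y -> Rabs (chi m y * W y - W y) <= 2).
Proof.
  intros Hm HC B0. destruct (m_facts m Hm) as [F1 F2].
  assert (F0 : 0 < 3 / m) by (apply Rdiv_lt_0_compat; lra).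
  assert (E : forall y, Rabs (chi m y * W y - W y) <= Rabs (W y)).
  { intros y. replace (chi m y * W y - W y) with ((chi m y - 1) * W y) by ring.
    rewrite Rabs_mult. generalize (chi_range m y). intro.
    assert (Rabs (chi m y - 1) <= 1) by (apply Rabs_le; lra).
    generalize (Rabs_pos (W y)). nra. }
  split; [|split].
  - intros y Hy. apply Rle_trans with (Rabs (W y) * y). apply Rmult_le_compat_r; [lra|apply E].
    destruct (B0 y ltac:(lra)) as [B1 _].
    apply Rle_trans with (C * y * y). apply Rmult_le_compat_r; lra.
    assert (y * y <= 1) by nra. nra.
  - intros y Hy. destruct (chi_reg2 m Hm y ltac:(lra) (proj1 Hy) (proj2 Hy)) as [-> _]. ring.
  - intros y Hy. eapply Rle_trans. apply E. destruct (W_bounds1 y ltac:(lra)) as [[A1 A2] _].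
    rewrite Rabs_right by lra. apply Rle_trans with (2 / y ^ 2); auto.
    assert (1 <= y ^ 2) by (rewrite <- (pow1 2); apply pow_incr; lra).
    unfold Rdiv. assert (/ y ^ 2 <= 1) by (rewrite <- Rinv_1; apply Rinv_le_contravar; lra). lra.
Qed.

Lemma e2_dom m C M1 M2 : 3 <= m -> 0 <= C -> 0 <= M1 -> 0 <= M2 ->
  (forall y, 0 < y <= 1 -> Rabs (W y) <= C * y /\ Rabs (dW y) <= 2 * C) ->
  (forall x, Rabs (dpsi x) <= M1) -> (forall x, Rabs (ddpsi x) <= M2) ->
  (forall y, 0 < y <= 3 / m -> Rabs (err2 m y) * y <= C + 9 * M2 * C + 18 * M1 * C) /\
  (forall y, 3 / m < y < m -> err2 m y = 0) /\
  (forall y, m <= y -> Rabs (err2 m y) <= 2 + 2 * M2 + 21 * M1).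
Proof.
  intros Hm HC HM1 HM2 B0 BM1 BM2. destruct (m_facts m Hm) as [F1 F2].
  assert (F0 : 0 < 3 / m) by (apply Rdiv_lt_0_compat; lra).
  split; [|split].
  - intros y Hy. destruct (chi_reg1 m Hm y (proj1 Hy) (proj2 Hy)) as [_ [E1 E2]].
    destruct (B0 y ltac:(lra)) as [B1 B2]. unfold err2.
    apply (reg1_bound (W y) (dW y) (chi m y) (chi1 m y) (chi2 m y) y m C M1 M2 (dpsi (m * y + -1)) (ddpsi (m * y + -1)));
      auto; try lra. apply chi_range.
  - intros y Hy. destruct (chi_reg2 m Hm y ltac:(lra) (proj1 Hy) (proj2 Hy)) as [A [B C']].
    unfold err2. rewrite A, B, C'. ring.
  - intros y Hy. destruct (chi_reg3 m Hm y ltac:(lra) Hy) as [_ [E1 E2]].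
    destruct (W_bounds1 y ltac:(lra)) as [[A1 A2] A3]. unfold err2.
    apply (reg3_bound (W y) (dW y) (chi m y) (chi1 m y) (chi2 m y) y m M1 M2 (dpsi (- / m * y + 2)) (ddpsi (- / m * y + 2)));
      auto; try lra; try apply chi_range; try (rewrite Rabs_right; lra).
Qed.

Lemma closure_W : in_closure_graph f0 W (fun y => -1 * W y).
Proof.
  destruct W_bounds0 as [C [HC B0]].
  destruct dpsi_bnd as [M1 [HM1 BM1]]. destruct ddpsi_bnd as [M2 [HM2 BM2]].
  destruct rho_decay as [K [HK HKd]].
  set (A1 := C). set (B1 := 2). set (A2 := C + 9 * M2 * C + 18 * M1 * C). set (B2 := 2 + 2 * M2 + 21 * M1).
  assert (HA1 : 0 <= A1) by (unfold A1; lra). assert (HB1 : 0 <= B1) by (unfold B1; lra).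
  assert (HA2 : 0 <= A2) by (unfold A2; generalize (Rmult_le_pos _ _ HM2 HC) (Rmult_le_pos _ _ HM1 HC); nra).
  assert (HB2 : 0 <= B2) by (unfold B2; lra).
  set (T1 := 2 * (10 * A1 ^ 2 + 2 * K * B1 ^ 2)). set (T2 := 2 * (10 * A2 ^ 2 + 2 * K * B2 ^ 2)).
  assert (HT1 : 0 <= T1) by (unfold T1; generalize (pow2_ge_0 A1) (pow2_ge_0 B1); nra).
  assert (HT2 : 0 <= T2) by (unfold T2; generalize (pow2_ge_0 A2) (pow2_ge_0 B2); nra).
  exists (fun n => fun y => chi (INR n + 3) y * W y). split.
  - intros n. set (m := INR n + 3). assert (Hm : 3 <= m) by (unfold m; generalize (pos_INR n); lra).
    split.
    + exists (/ m), (2 * m). split. split. apply Rinv_0_lt_compat; lra.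
      apply Rlt_le_trans with 1. rewrite <- Rinv_1. apply Rinv_lt_contravar; lra. lra.
      intros y Hy. rewrite chi_supp by auto. ring.
    + intros k y Hy. apply (SM_mult Pos (chi m) W open_Pos (SMall_SM _ _ (chi_SM m)) W_SM k k y); auto.
  - intros eps Heps. destruct (INR_unbounded ((T1 + T2) / eps)) as [N HN]. exists N. intros n Hn.
    set (m := INR n + 3). assert (Hm : 3 <= m) by (unfold m; generalize (pos_INR n); lra).
    assert (HmN : INR N <= INR n) by (apply le_INR; auto).
    assert (HTm : (T1 + T2) / m < eps).
    { apply Rmult_lt_reg_r with m. lra. replace ((T1 + T2) / m * m) with (T1 + T2) by (field; lra).
      assert ((T1 + T2) / eps < m) by (unfold m; lra).
      apply Rmult_lt_compat_r with (r := eps) in H; auto.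
      replace ((T1 + T2) / eps * eps) with (T1 + T2) in H by (field; lra). lra. }
    assert (HT1m : T1 / m <= (T1 + T2) / m) by (unfold Rdiv; apply Rmult_le_compat_r; [left; apply Rinv_0_lt_compat; lra | lra]).
    assert (HT2m : T2 / m <= (T1 + T2) / m) by (unfold Rdiv; apply Rmult_le_compat_r; [left; apply Rinv_0_lt_compat; lra | lra]).
    split.
    + destruct (e1_dom m C Hm HC B0) as [R1 [R2 R3]].
      destruct (gen_int (fun y => ((fun y => chi m y * W y) y - W y) ^ 2 * rho y) (10 * A1 ^ 2) (2 * K * B1 ^ 2) m)
        as [v [Hv Hvb]].
      * lra.
      * generalize (pow2_ge_0 A1); lra.
      * generalize (pow2_ge_0 B1); nra.
      * intros a b Ha Hab. apply (@ex_RInt_continuous R_CompleteNormedModule). intros z Hz.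
        rewrite Rmin_left, Rmax_right in Hz by lra. apply continuity_pt_filterlim. apply cont_e1. lra.
      * intros y Hy. apply (dom_bound (fun y => chi m y * W y - W y) m A1 B1 K); auto.
      * exists v. split. exact Hv. unfold T1 in HT1m. replace (2 * (10 * A1 ^ 2 + 2 * K * B1 ^ 2) / m) with (T1 / m) in Hvb by reflexivity. lra.
    + destruct (e2_dom m C M1 M2 Hm HC HM1 HM2 B0 BM1 BM2) as [R1 [R2 R3]].
      destruct (gen_int (fun y => (A0 f0 (fun y => chi m y * W y) y - (fun y => -1 * W y) y) ^ 2 * rho y)
        (10 * A2 ^ 2) (2 * K * B2 ^ 2) m) as [v [Hv Hvb]].
      * lra.
      * generalize (pow2_ge_0 A2); lra.
      * generalize (pow2_ge_0 B2); nra.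
      * intros a b Ha Hab. apply (ex_RInt_ext (fun y => err2 m y ^ 2 * rho y)).
        { intros x Hx. rewrite Rmin_left, Rmax_right in Hx by lra. cbv beta. rewrite A0_phi by lra. reflexivity. }
        apply (@ex_RInt_continuous R_CompleteNormedModule). intros z Hz.
        rewrite Rmin_left, Rmax_right in Hz by lra. apply continuity_pt_filterlim. apply cont_err2. lra.
      * intros y Hy. cbv beta. rewrite A0_phi by lra. apply (dom_bound (err2 m) m A2 B2 K); auto.
      * exists v. split. exact Hv. replace (2 * (10 * A2 ^ 2 + 2 * K * B2 ^ 2) / m) with (T2 / m) in Hvb by reflexivity. lra.
Qed.

End F.

Theorem lemma3 (f0 : R -> R)
  (Hsmooth : smooth_closed_halfline f0)
  (Hmono : monotone_halfline f0)
  (Hode : forall y, 0 < y ->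
     Derive_n f0 2 y + (2 / y - y / 2) * Derive f0 y
       - sin (2 * f0 y) / y ^ 2 = 0)
  (H0 : f0 0 = 0)
  (Hinf : exists L, filterlim f0 (Rbar_locally p_infty) (locally L))
  (Hclose : weighted_norm_le (fun y => f0 y - ftilde y) (5 / 10000)) :
  eigenfunction_A0 f0 (fun y => y * Derive f0 y) (-1) /\
  (forall y, 0 < y -> 0 < y * Derive f0 y).
Proof.
  assert (P : forall y, 0 < y -> 0 < y * Derive f0 y).
  { intros y Hy. apply Rmult_lt_0_compat; auto. apply (df_pos f0); auto. }
  split; auto. split.
  - apply (closure_W f0); auto.
  - exists 1. split. lra. generalize (P 1 ltac:(lra)). lra.
Qed.
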